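(* Let $q:\mathcal{S}_0=\bigsqcup_{\lambda\in\Lambda}S_\lambda\to Z$ be a striped atlas on a striped surface $Z$. Then $q$ is equivalent to an affine striped atlas. Moreover, if every $S_\lambda$ is a model strip, then there exists a foliated homeomorphism $h:\mathcal{S}_0\to\mathcal{S}_0$ (with respect to the canonical foliations of the strips) such that $q\circ h:\mathcal{S}_0\to Z$ is an affine striped atlas.
   Context: A strip is a subset $S\subset\mathbb{R}^2$ with $\mathbb{R}\times(u,v)\subset S\subset\mathbb{R}\times[u,v]$ for some $u<v$, open in $\mathbb{R}\times[u,v]$; $\partial_-S=S\cap(\mathbb{R}\times\{u\})$, $\partial_+S=S\cap(\mathbb{R}\times\{v\})$, $\partial S=\partial_-S\cup\partial_+S$, whose connected components (open horizontal intervals) are the boundary intervals. A model strip is a strip whose boundary intervals are bounded and have mutually disjoint closures in $\mathbb{R}\times[u,v]$. The canonical foliation of a strip consists of the lines $\mathbb{R}\times\{t\}$, $t\in(u,v)$, and the boundary intervals; a foliated homeomorphism maps leaves onto leaves. A striped atlas on a two-dimensional topological manifold $Z$ is a map $q:\mathcal{S}_0\to Z$ where $\mathcal{S}_0=\bigsqcup_{\lambda\in\Lambda}S_\lambda$ is a disjoint union of at most countably many strips, $q$ is a quotient map (continuous, surjective, and $U\subset Z$ is open iff $q^{-1}(U)\cap S_\lambda$ is open in $S_\lambda$ for every $\lambda$), and there are two families $\{X_\gamma\}_{\gamma\in\Gamma}$, $\{Y_\gamma\}_{\gamma\in\Gamma}$ of boundary intervals of strips of $\mathcal{S}_0$, all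 of them mutually distinct (hence disjoint), such that $q$ is injective on the complement of $\bigcup_\gamma(X_\gamma\cup Y_\gamma)$, $q(X_\gamma)=q(Y_\gamma)$, and $q|_{X_\gamma}$, $q|_{Y_\gamma}$ are embeddings with closed images. A surface admitting a striped atlas is a striped surface. Gluing maps: $\phi_\gamma=(q|_{X_\gamma})^{-1}\circ q|_{Y_\gamma}:Y_\gamma\to X_\gamma$; writing $X_\gamma=(a,b)\times\{x_\gamma\}$, $Y_\gamma=(c,d)\times\{y_\gamma\}$, one has $\phi_\gamma(s,y_\gamma)=(\psi_\gamma(s),x_\gamma)$ for a homeomorphism $\psi_\gamma:(c,d)\to(a,b)$. The atlas is affine if all $S_\lambda$ are model strips and every $\psi_\gamma$ is affine, i.e. equals $t\mapsto\frac{b-a}{d-c}(t-c)+a$ or $t\mapsto\frac{a-b}{d-c}(t-c)+b$. Two striped atlases $q:\mathcal{S}_0\to Z$, $q':\mathcal{S}'_0\to Z'$ are equivalent if there are foliated homeomorphisms $h:\mathcal{S}_0\to\mathcal{S}'_0$ (canonical foliations of strips) and $k:Z\to Z'$ (canonical foliations of $Z$, $Z'$, whose leaves are the $q$-images of leaves of the strips) with $q'\circ h=k\circ q$. *)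

(* Defs.v *)
From Stdlib Require Import Reals.
Open Scope R_scope.

Definition is_topology {T : Type} (opn : (T -> Prop) -> Prop) : Prop :=
  opn (fun _ => True) /\ opn (fun _ => False) /\
  (forall U V, opn U -> opn V -> opn (fun x => U x /\ V x)) /\
  (forall F : (T -> Prop) -> Prop, (forall U, F U -> opn U) ->
     opn (fun x => exists U, F U /\ U x)).

Definition sub_open {T : Type} (opn : (T -> Prop) -> Prop) (A W : T -> Prop) : Prop :=
  exists U, opn U /\ forall x, A x -> (W x <-> U x).

Definition continuous_on {T T' : Type} (opn : (T -> Prop) -> Prop) (A : T -> Prop)
  (opn' : (T' -> Prop) -> Prop) (B : T' -> Prop) (f : T -> T') : Prop :=
  (forall x, A x -> B (f x)) /\
  (forall V, opn' V -> sub_open opn A (fun x => V (f x))).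

Definition homeo_on {T T' : Type} (opn : (T -> Prop) -> Prop) (A : T -> Prop)
  (opn' : (T' -> Prop) -> Prop) (B : T' -> Prop) (f : T -> T') : Prop :=
  exists g : T' -> T,
    continuous_on opn A opn' B f /\ continuous_on opn' B opn A g /\
    (forall x, A x -> g (f x) = x) /\ (forall y, B y -> f (g y) = y).

Definition image {T T' : Type} (f : T -> T') (L : T -> Prop) : T' -> Prop :=
  fun y => exists x, L x /\ f x = y.

Definition open2 (O : R * R -> Prop) : Prop :=
  forall p, O p -> exists e, 0 < e /\
    forall p', Rabs (fst p' - fst p) < e -> Rabs (snd p' - snd p) < e -> O p'.

Definition closure2 (J : R * R -> Prop) (p : R * R) : Prop :=
  forall e, 0 < e -> exists p', J p' /\ Rabs (fst p' - fst p) < e /\ Rabs (snd p' - snd p) < e.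

(** Closed upper half-plane, model of a 2-manifold with boundary. *)
Definition halfplane (p : R * R) : Prop := 0 <= snd p.

Definition surface2 {Z : Type} (opn : (Z -> Prop) -> Prop) : Prop :=
  (forall z1 z2, z1 <> z2 -> exists U V, opn U /\ opn V /\ U z1 /\ V z2 /\
      forall z, ~ (U z /\ V z)) /\
  (forall z, exists (U : Z -> Prop) (V : R * R -> Prop) (phi : Z -> R * R),
      opn U /\ U z /\ (forall p, V p -> halfplane p) /\ sub_open open2 halfplane V /\
      homeo_on opn U open2 V phi).

Definition convex (I : R -> Prop) : Prop :=
  forall x y z, I x -> I z -> x <= y <= z -> I y.

Definition is_strip (S : R * R -> Prop) (u v : R) : Prop :=
  u < v /\
  (forall x t, u < t < v -> S (x, t)) /\
  (forall p, S p -> u <= snd p <= v) /\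
  (exists O, open2 O /\ forall p, u <= snd p <= v -> (S p <-> O p)).

(** J is a boundary interval: a connected component of ∂_-S or ∂_+S. *)
Definition boundary_interval (S : R * R -> Prop) (u v : R) (J : R * R -> Prop) : Prop :=
  exists (t : R) (I : R -> Prop),
    (t = u \/ t = v) /\ (exists x, I x) /\ convex I /\
    (forall x, I x -> S (x, t)) /\
    (forall I', convex I' -> (forall x, I x -> I' x) -> (forall x, I' x -> S (x, t)) ->
        forall x, I' x -> I x) /\
    (forall p, J p <-> (I (fst p) /\ snd p = t)).

Definition model_strip (S : R * R -> Prop) (u v : R) : Prop :=
  is_strip S u v /\
  (forall J, boundary_interval S u v J -> exists M, forall p, J p -> Rabs (fst p) <= M) /\
  (forall J1 J2, boundary_interval S u v J1 -> boundary_interval S u v J2 ->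
     ~ (forall p, J1 p <-> J2 p) -> forall p, ~ (closure2 J1 p /\ closure2 J2 p)).

Definition strip_leaf (S : R * R -> Prop) (u v : R) (L : R * R -> Prop) : Prop :=
  (exists t, u < t < v /\ forall p, L p <-> snd p = t) \/ boundary_interval S u v L.

(** * Disjoint unions of strips S_0 = ⊔_λ S_λ, points are pairs (λ, p). *)

Definition S0 {L : Type} (S : L -> R * R -> Prop) (x : L * (R * R)) : Prop :=
  S (fst x) (snd x).

(** Disjoint-union topology on L x R^2 (L discrete). *)
Definition opnP {L : Type} (U : L * (R * R) -> Prop) : Prop :=
  forall l, open2 (fun p => U (l, p)).

Definition S0_leaf {L : Type} (S : L -> R * R -> Prop) (u v : L -> R)
  (Lf : L * (R * R) -> Prop) : Prop :=
  exists l L0, strip_leaf (S l) (u l) (v l) L0 /\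
    forall x, Lf x <-> (fst x = l /\ L0 (snd x)).

Definition Z_leaf {L Z : Type} (S : L -> R * R -> Prop) (u v : L -> R)
  (q : L * (R * R) -> Z) (K : Z -> Prop) : Prop :=
  exists Lf, S0_leaf S u v Lf /\ forall z, K z <-> image q Lf z.

Definition maps_leaves {T T' : Type} (leafA : (T -> Prop) -> Prop)
  (leafB : (T' -> Prop) -> Prop) (f : T -> T') : Prop :=
  forall Lf, leafA Lf -> leafB (image f Lf).

(** A boundary interval of S_0 is a pair (λ, J). *)
Definition inB {L : Type} (b : L * (R * R -> Prop)) (x : L * (R * R)) : Prop :=
  fst x = fst b /\ snd b (snd x).

Definition same_bi {L : Type} (b1 b2 : L * (R * R -> Prop)) : Prop :=
  fst b1 = fst b2 /\ forall p, snd b1 p <-> snd b2 p.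

Definition closed_embedding {L Z : Type} (opnZ : (Z -> Prop) -> Prop)
  (q : L * (R * R) -> Z) (A : L * (R * R) -> Prop) : Prop :=
  (forall x y, A x -> A y -> q x = q y -> x = y) /\
  continuous_on opnP A opnZ (fun _ => True) q /\
  (forall W, sub_open opnP A W -> exists U, opnZ U /\
      forall z, (exists x, A x /\ W x /\ q x = z) <-> (U z /\ image q A z)) /\
  opnZ (fun z => ~ image q A z).

(** q : S_0 -> Z is a striped atlas, with gluing families X, Y indexed by G. *)
Definition striped_atlas_fam {L Z G : Type} (opnZ : (Z -> Prop) -> Prop)
  (S : L -> R * R -> Prop) (u v : L -> R) (q : L * (R * R) -> Z)
  (X Y : G -> L * (R * R -> Prop)) : Prop :=
  (exists f : L -> nat, forall l1 l2, f l1 = f l2 -> l1 = l2) /\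
  (forall l, is_strip (S l) (u l) (v l)) /\
  (forall z, exists x, S0 S x /\ q x = z) /\
  (forall U, opnZ U <-> forall l, sub_open open2 (S l) (fun p => U (q (l, p)))) /\
  (forall g, boundary_interval (S (fst (X g))) (u (fst (X g))) (v (fst (X g))) (snd (X g))) /\
  (forall g, boundary_interval (S (fst (Y g))) (u (fst (Y g))) (v (fst (Y g))) (snd (Y g))) /\
  (forall g1 g2, same_bi (X g1) (X g2) -> g1 = g2) /\
  (forall g1 g2, same_bi (Y g1) (Y g2) -> g1 = g2) /\
  (forall g1 g2, ~ same_bi (X g1) (Y g2)) /\
  (forall x y, S0 S x -> S0 S y ->
     (forall g, ~ inB (X g) x /\ ~ inB (Y g) x) ->
     (forall g, ~ inB (X g) y /\ ~ inB (Y g) y) -> q x = q y -> x = y) /\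
  (forall g z, image q (inB (X g)) z <-> image q (inB (Y g)) z) /\
  (forall g, closed_embedding opnZ q (inB (X g))) /\
  (forall g, closed_embedding opnZ q (inB (Y g))).

Definition striped_atlas {L Z : Type} (opnZ : (Z -> Prop) -> Prop)
  (S : L -> R * R -> Prop) (u v : L -> R) (q : L * (R * R) -> Z) : Prop :=
  exists (G : Type) (X Y : G -> L * (R * R -> Prop)), striped_atlas_fam opnZ S u v q X Y.

(** The gluing map psi_g : (c,d) -> (a,b) is affine:
    phi_g(s, y_g) = (psi_g s, x_g), i.e. q(psi_g s, x_g) = q(s, y_g). *)
Definition affine_gluing {L Z : Type} (q : L * (R * R) -> Z)
  (Xg Yg : L * (R * R -> Prop)) : Prop :=
  exists a b c d xg yg, a < b /\ c < d /\
    (forall p, snd Xg p <-> (a < fst p < b /\ snd p = xg)) /\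
    (forall p, snd Yg p <-> (c < fst p < d /\ snd p = yg)) /\
    ((forall s, c < s < d ->
        q (fst Xg, ((b - a) / (d - c) * (s - c) + a, xg)) = q (fst Yg, (s, yg))) \/
     (forall s, c < s < d ->
        q (fst Xg, ((a - b) / (d - c) * (s - c) + b, xg)) = q (fst Yg, (s, yg)))).

Definition affine_atlas {L Z : Type} (opnZ : (Z -> Prop) -> Prop)
  (S : L -> R * R -> Prop) (u v : L -> R) (q : L * (R * R) -> Z) : Prop :=
  (forall l, model_strip (S l) (u l) (v l)) /\
  exists (G : Type) (X Y : G -> L * (R * R -> Prop)),
    striped_atlas_fam opnZ S u v q X Y /\ forall g, affine_gluing q (X g) (Y g).

Definition atlas_equiv {L Z L' Z' : Type}
  (opnZ : (Z -> Prop) -> Prop) (S : L -> R * R -> Prop) (u v : L -> R) (q : L * (R * R) -> Z)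
  (opnZ' : (Z' -> Prop) -> Prop) (S' : L' -> R * R -> Prop) (u' v' : L' -> R)
  (q' : L' * (R * R) -> Z') : Prop :=
  exists (h : L * (R * R) -> L' * (R * R)) (k : Z -> Z'),
    homeo_on opnP (S0 S) opnP (S0 S') h /\
    maps_leaves (S0_leaf S u v) (S0_leaf S' u' v') h /\
    homeo_on opnZ (fun _ => True) opnZ' (fun _ => True) k /\
    maps_leaves (Z_leaf S u v q) (Z_leaf S' u' v' q') k /\
    (forall x, S0 S x -> q' (h x) = k (q x)).

(* Main.v *)
Require Import Defs.
From Stdlib Require Import Reals Lra Lia Classical ClassicalEpsilon FunctionalExtensionality PropExtensionality.
Open Scope R_scope.

Lemma clamp_ok a b x : a <= b -> a <= Rmax a (Rmin b x) <= b.
Proof. intros. unfold Rmax, Rmin. repeat destruct Rle_dec; lra. Qed.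

Lemma clamp_id a b x : a <= x <= b -> Rmax a (Rmin b x) = x.
Proof. intros. unfold Rmax, Rmin. repeat destruct Rle_dec; lra. Qed.

Lemma clamp_lip a b x y : a <= b -> Rabs (Rmax a (Rmin b x) - Rmax a (Rmin b y)) <= Rabs (x - y).
Proof. intros. unfold Rmax, Rmin. repeat destruct Rle_dec; unfold Rabs; repeat destruct Rcase_abs; lra. Qed.

Lemma myIVT (f : R -> R) a b y : a < b ->
  (forall x, a <= x <= b -> forall e, 0 < e -> exists d, 0 < d /\
     forall x', a <= x' <= b -> Rabs (x' - x) < d -> Rabs (f x' - f x) < e) ->
  f a < y < f b -> exists x, a <= x <= b /\ f x = y.
Proof.
  intros Hab Hc Hy.
  set (g := fun x => f (Rmax a (Rmin b x)) - y).
  assert (Hg : forall x, continuity_pt g x).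
  { intros x0 e He. simpl.
    destruct (Hc (Rmax a (Rmin b x0)) (clamp_ok a b x0 ltac:(lra)) e He) as [d [Hd Hd']].
    exists d. split; [lra|]. intros x [_ Hx]. unfold R_dist in *. unfold g.
    replace (f (Rmax a (Rmin b x)) - y - (f (Rmax a (Rmin b x0)) - y)) with
      (f (Rmax a (Rmin b x)) - f (Rmax a (Rmin b x0))) by ring.
    apply Hd'. apply clamp_ok; lra.
    eapply Rle_lt_trans. apply clamp_lip. lra. exact Hx. }
  destruct (IVT g a b (fun x => Hg x) Hab) as [z [Hz Hz']].
  - unfold g. rewrite clamp_id by lra. lra.
  - unfold g. rewrite clamp_id by lra. lra.
  - exists z. split; auto. unfold g in Hz'. rewrite clamp_id in Hz' by lra. lra.
Qed.

Definition Good (S : R*R -> Prop) (u v : R) (F : R -> R -> R) : Prop :=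
  is_strip S u v /\
  (forall x t, S (x,t) -> forall e, 0<e -> exists d, 0<d /\ forall x' t', S (x',t') ->
      Rabs (x'-x)<d -> Rabs (t'-t)<d -> Rabs (F x' t' - F x t) < e) /\
  (forall x y t, S (x,t) -> S (y,t) -> x<y -> F x t < F y t) /\
  (forall t, u<t<v -> forall y, exists x, F x t = y).

Definition Img (S : R*R -> Prop) (F : R -> R -> R) (p : R*R) : Prop :=
  exists x, S (x, snd p) /\ F x (snd p) = fst p.

Definition Inv (S : R*R -> Prop) (F : R -> R -> R) (y t : R) : R :=
  epsilon (inhabits 0) (fun x => S (x,t) /\ F x t = y).

Lemma Inv_spec S F y t : Img S F (y,t) -> S (Inv S F y t, t) /\ F (Inv S F y t) t = y.
Proof. intros [x Hx]. unfold Inv. apply (epsilon_spec (inhabits 0) (fun x => S (x,t) /\ F x t = y)).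
  exists x. exact Hx. Qed.

Lemma Good_inj S u v F x y t : Good S u v F -> S (x,t) -> S (y,t) -> F x t = F y t -> x = y.
Proof. intros [_ [_ [Hm _]]] Hx Hy E.
  destruct (Rtotal_order x y) as [H|[H|H]]; auto.
  - specialize (Hm _ _ _ Hx Hy H). lra.
  - specialize (Hm _ _ _ Hy Hx H). lra.
Qed.

Lemma Inv_F S u v F x t : Good S u v F -> S (x,t) -> Inv S F (F x t) t = x.
Proof. intros G Hx. destruct (Inv_spec S F (F x t) t) as [H1 H2].
  - exists x. simpl. auto.
  - eapply Good_inj; eauto.
Qed.

Lemma Rabs_self a r : 0 < r -> Rabs (a - a) < r.
Proof. intros. replace (a-a) with 0 by ring. rewrite Rabs_R0. auto. Qed.

Lemma strip_box S u v x t : is_strip S u v -> S (x,t) ->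
  exists r, 0 < r /\ forall x' t', Rabs (x'-x) < r -> Rabs (t'-t) < r -> u <= t' <= v -> S (x',t').
Proof. intros [_ [_ [Hb [O [HO HSO]]]]] Hx.
  specialize (Hb _ Hx) as Hb'. simpl in Hb'.
  assert (HOx : O (x,t)) by (apply HSO; auto).
  destruct (HO _ HOx) as [e [He He']].
  exists e. split; auto. intros x' t' H1 H2 H3.
  apply HSO; simpl; auto.
Qed.

Lemma strip_bounds S u v x t : is_strip S u v -> S (x,t) -> u <= t <= v.
Proof. intros [_ [_ [Hb _]]] Hx. exact (Hb _ Hx). Qed.

Lemma level_open S u v x t : is_strip S u v -> S (x,t) ->
  exists r, 0 < r /\ forall x', Rabs (x'-x) < r -> S (x',t).
Proof. intros Hs Hx. destruct (strip_box S u v x t Hs Hx) as [r [Hr H]].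
  exists r. split; auto. intros. apply H; auto. apply Rabs_self; auto.
  eapply strip_bounds; eauto. Qed.

Lemma level_IVT S u v F a b y t : Good S u v F -> a < b -> (forall z, a <= z <= b -> S (z,t)) ->
  F a t < y < F b t -> exists z, a <= z <= b /\ F z t = y.
Proof. intros G Hab HS Hy.
  apply (myIVT (fun z => F z t) a b y Hab); auto.
  intros x Hx e He. destruct G as [_ [Hc _]].
  destruct (Hc x t (HS x Hx) e He) as [d [Hd Hd']].
  exists d. split; auto. intros x' Hx' Hxx. apply Hd'; auto.
  apply Rabs_self; auto.
Qed.

Lemma Img_boundary S u v F x y t : Good S u v F -> S (x,t) -> F x t = y -> (t = u \/ t = v) ->
  exists r, 0 < r /\ forall p', Rabs (fst p' - y) < r -> Rabs (snd p' - t) < r ->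
     u <= snd p' <= v -> Img S F p'.
Proof. intros G Hx Hy Ht. pose proof G as [Hs [Hc [Hm Hsu]]]. pose proof Hs as [Huv [Hint [Hb Ho]]].
  destruct (strip_box S u v x t Hs Hx) as [r0 [Hr0 Hbox]].
  assert (Htb : u <= t <= v) by (eapply strip_bounds; eauto).
  assert (HS : forall z, x - r0/2 <= z <= x + r0/2 -> S (z,t)).
  { intros z Hz. apply Hbox; auto. unfold Rabs; destruct Rcase_abs; lra. apply Rabs_self; auto. }
  assert (Ha : F (x - r0/2) t < y). { subst y. apply Hm; auto. apply HS; lra. lra. }
  assert (Hbb : y < F (x + r0/2) t). { subst y. apply Hm; auto. apply HS; lra. lra. }
  exists (Rmin (Rmin (y - F (x - r0/2) t) (F (x + r0/2) t - y)) (v-u)). split.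
  { repeat apply Rmin_pos; lra. }
  intros [y' t'] H1 H2 H3. simpl in *.
  assert (Hm1 : Rmin (Rmin (y - F (x - r0/2) t) (F (x + r0/2) t - y)) (v-u) <= y - F (x - r0/2) t).
  { eapply Rle_trans. apply Rmin_l. apply Rmin_l. }
  assert (Hm2 : Rmin (Rmin (y - F (x - r0/2) t) (F (x + r0/2) t - y)) (v-u) <= F (x + r0/2) t - y).
  { eapply Rle_trans. apply Rmin_l. apply Rmin_r. }
  assert (Hm3 : Rmin (Rmin (y - F (x - r0/2) t) (F (x + r0/2) t - y)) (v-u) <= v - u) by apply Rmin_r.
  destruct (Req_dec t' t) as [E|E].
  - subst t'. destruct (level_IVT S u v F (x - r0/2) (x + r0/2) y' t G ltac:(lra) HS) as [z [Hz Hz']].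
    { revert H1. unfold Rabs; destruct Rcase_abs; lra. }
    exists z. simpl. split; auto.
  - assert (u < t' < v). { revert H2. unfold Rabs; destruct Rcase_abs; destruct Ht; lra. }
    destruct (Hsu t' H y') as [x' Hx']. exists x'. simpl. split; auto.
Qed.

Lemma Img_strip S u v F : Good S u v F -> is_strip (Img S F) u v.
Proof. intros G. pose proof G as [Hs [Hc [Hm Hsu]]]. pose proof Hs as [Huv [Hint [Hb Ho]]].
  split; [auto|]. split.
  { intros y t Ht. destruct (Hsu t Ht y) as [x Hx]. exists x. simpl. auto. }
  split.
  { intros [y t] [x [Hx _]]. simpl in *. exact (Hb _ Hx). }
  exists (fun p => exists r, 0 < r /\ forall p', Rabs (fst p' - fst p) < r -> Rabs (snd p' - snd p) < r ->
     u <= snd p' <= v -> Img S F p').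
  split.
  { intros p [r [Hr H]]. exists (r/2). split; [lra|]. intros p' H1 H2.
    exists (r/2). split; [lra|]. intros p'' H3 H4 H5. apply H; auto.
    - replace (fst p'' - fst p) with ((fst p'' - fst p') + (fst p' - fst p)) by ring.
      eapply Rle_lt_trans. apply Rabs_triang. lra.
    - replace (snd p'' - snd p) with ((snd p'' - snd p') + (snd p' - snd p)) by ring.
      eapply Rle_lt_trans. apply Rabs_triang. lra. }
  intros [y t] Hut. simpl in Hut. split.
  2:{ intros [r [Hr H]]. apply H; simpl; auto; apply Rabs_self; auto. }
  intros [x [Hx Hy]]. simpl in Hx, Hy.
  destruct (Rlt_dec u t) as [Hut1|Hut1]; [destruct (Rlt_dec t v) as [Htv|Htv]|].
  - exists (Rmin (t-u) (v-t)). split. apply Rmin_pos; lra.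
    intros [y' t'] H1 H2 H3. simpl in *.
    assert (u < t' < v). { revert H2. unfold Rmin. destruct Rle_dec; unfold Rabs; destruct Rcase_abs; lra. }
    destruct (Hsu t' H y') as [x' Hx']. exists x'. simpl. split; auto.
  - assert (Ht : t = v) by lra. eapply Img_boundary; eauto.
  - assert (Ht : t = u) by lra. eapply Img_boundary; eauto.
Qed.

Lemma Good_mono_le S u v F x y t : Good S u v F -> S (x,t) -> S (y,t) -> F x t < F y t -> x < y.
Proof. intros G Hx Hy H. destruct (Rtotal_order x y) as [E|[E|E]]; auto.
  - subst. lra.
  - pose proof (proj1 (proj2 (proj2 G)) _ _ _ Hy Hx E). lra. Qed.

Lemma Img_Inv_iff S u v F p : Good S u v F -> (Img (Img S F) (Inv S F) p <-> S p).
Proof. intros G. destruct p as [x t]. split.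
  - intros [y [Hy E]]. simpl in *. destruct (Inv_spec S F y t Hy) as [H1 H2]. rewrite E in H1. auto.
  - intros Hx. exists (F x t). simpl. split.
    + exists x. simpl. auto.
    + eapply Inv_F; eauto.
Qed.

Lemma Inv_good S u v F : Good S u v F -> Good (Img S F) u v (Inv S F).
Proof. intros G. pose proof G as [Hs [Hc [Hm Hsu]]].
  split; [apply Img_strip; auto|]. split; [|split].
  - intros y0 t0 Hy0 e He.
    destruct (Inv_spec S F y0 t0 Hy0) as [Hx0 Ex0].
    set (x0 := Inv S F y0 t0) in *.
    destruct (strip_box S u v x0 t0 Hs Hx0) as [r0 [Hr0 Hbox]].
    set (eta := Rmin e r0 / 2).
    assert (Heta : 0 < eta /\ eta < e /\ eta < r0).
    { unfold eta. pose proof (Rmin_l e r0). pose proof (Rmin_r e r0). pose proof (Rmin_pos e r0 He Hr0). lra. }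
    assert (Ht0 : u <= t0 <= v) by (eapply strip_bounds; eauto).
    assert (Hm0 : S (x0 - eta, t0)). { apply Hbox; auto. unfold Rabs; destruct Rcase_abs; lra. apply Rabs_self; lra. }
    assert (Hp0 : S (x0 + eta, t0)). { apply Hbox; auto. unfold Rabs; destruct Rcase_abs; lra. apply Rabs_self; lra. }
    assert (Ha : F (x0 - eta) t0 < y0). { rewrite <- Ex0. apply Hm; auto. lra. }
    assert (Hb : y0 < F (x0 + eta) t0). { rewrite <- Ex0. apply Hm; auto. lra. }
    set (k := Rmin (y0 - F (x0 - eta) t0) (F (x0 + eta) t0 - y0) / 2).
    assert (Hk : 0 < k /\ 2*k <= y0 - F (x0 - eta) t0 /\ 2*k <= F (x0 + eta) t0 - y0).
    { unfold k. pose proof (Rmin_l (y0 - F (x0 - eta) t0) (F (x0 + eta) t0 - y0)).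
      pose proof (Rmin_r (y0 - F (x0 - eta) t0) (F (x0 + eta) t0 - y0)).
      pose proof (Rmin_pos (y0 - F (x0 - eta) t0) (F (x0 + eta) t0 - y0) ltac:(lra) ltac:(lra)). lra. }
    destruct (Hc _ _ Hm0 k (proj1 Hk)) as [dm [Hdm Hdm']].
    destruct (Hc _ _ Hp0 k (proj1 Hk)) as [dp [Hdp Hdp']].
    exists (Rmin (Rmin k dm) (Rmin dp r0)). split.
    { repeat apply Rmin_pos; lra. }
    intros y t' Hy H1 H2.
    pose proof (Rmin_l (Rmin k dm) (Rmin dp r0)) as M1. pose proof (Rmin_r (Rmin k dm) (Rmin dp r0)) as M2.
    pose proof (Rmin_l k dm). pose proof (Rmin_r k dm). pose proof (Rmin_l dp r0). pose proof (Rmin_r dp r0).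
    destruct (Inv_spec S F y t' Hy) as [Hx Ex]. set (x := Inv S F y t') in *.
    assert (Ht' : u <= t' <= v). { destruct Hy as [z [Hz _]]. eapply strip_bounds; eauto. }
    assert (Sm : S (x0 - eta, t')). { apply Hbox; auto. unfold Rabs; destruct Rcase_abs; lra. lra. }
    assert (Sp : S (x0 + eta, t')). { apply Hbox; auto. unfold Rabs; destruct Rcase_abs; lra. lra. }
    specialize (Hdm' _ _ Sm ltac:(apply Rabs_self; lra) ltac:(lra)).
    specialize (Hdp' _ _ Sp ltac:(apply Rabs_self; lra) ltac:(lra)).
    apply Rabs_def2 in Hdm'. apply Rabs_def2 in Hdp'. apply Rabs_def2 in H1.
    assert (L1 : F (x0 - eta) t' < F x t')  by (rewrite Ex; lra).
    assert (L2 : F x t' < F (x0 + eta) t') by (rewrite Ex; lra).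
    pose proof (Good_mono_le S u v F _ _ _ G Sm Hx L1) as L1'.
    pose proof (Good_mono_le S u v F _ _ _ G Hx Sp L2) as L2'.
    clearbody x. destruct Heta as [He1 [He2 He3]]. apply Rabs_def1; lra.
  - intros y1 y2 t H1 H2 H. destruct (Inv_spec S F y1 t H1) as [A1 B1]. destruct (Inv_spec S F y2 t H2) as [A2 B2].
    apply (Good_mono_le S u v F _ _ _ G A1 A2). lra.
  - intros t Ht x. exists (F x t). apply (Inv_F S u v F); auto. apply Hs. auto.
Qed.

Definition openR (B : R -> Prop) := forall x, B x -> exists r, 0 < r /\ forall x', Rabs (x' - x) < r -> B x'.
Definition maxconv (B I : R -> Prop) := convex I /\ (forall x, I x -> B x) /\
  (forall I', convex I' -> (forall x, I x -> I' x) -> (forall x, I' x -> B x) -> forall x, I' x -> I x).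
Definition incr_on (B : R -> Prop) (f : R -> R) := forall x y, B x -> B y -> x < y -> f x < f y.

Lemma convex_union (I1 I2 : R -> Prop) z : convex I1 -> convex I2 -> I1 z -> I2 z ->
  convex (fun x => I1 x \/ I2 x).
Proof. intros C1 C2 H1 H2 x y w Hx Hw Hy.
  destruct Hx as [Hx|Hx]; destruct Hw as [Hw|Hw].
  - left. apply (C1 x y w Hx Hw Hy).
  - destruct (Rle_dec y z).
    + left. apply (C1 x y z Hx H1). lra.
    + right. apply (C2 z y w H2 Hw). lra.
  - destruct (Rle_dec y z).
    + right. apply (C2 x y z Hx H2). lra.
    + left. apply (C1 z y w H1 Hw). lra.
  - right. apply (C2 x y w Hx Hw Hy).
Qed.

Lemma maxconv_open B I x : openR B -> maxconv B I -> I x ->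
  exists r, 0 < r /\ forall x', Rabs (x' - x) < r -> I x'.
Proof. intros HB [C [IB M]] Hx. destruct (HB x (IB x Hx)) as [r [Hr Hr']].
  exists r. split; auto. intros x' Hx'.
  apply (M (fun z => I z \/ Rabs (z - x) < r)); auto.
  - apply (convex_union I (fun z => Rabs (z - x) < r) x C); auto.
    + intros a b c Ha Hc Hb. apply Rabs_def2 in Ha. apply Rabs_def2 in Hc. apply Rabs_def1; lra.
    + replace (x - x) with 0 by ring. rewrite Rabs_R0. auto.
  - intros z [Hz|Hz]; auto.
Qed.

Lemma lub_approx E b e : is_lub E b -> 0 < e -> exists z, E z /\ b - e < z.
Proof. intros [Hub Hl] He. apply NNPP. intro N.
  assert (b <= b - e). { apply Hl. intros z Hz. destruct (Rle_dec z (b - e)); auto.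
    exfalso. apply N. exists z. split; auto. lra. }
  lra. Qed.

Lemma right_end B I x0 x1 : openR B -> maxconv B I -> I x0 -> ~ I x1 -> x0 < x1 ->
  exists b, x0 < b <= x1 /\ ~ B b /\ (forall z, x0 <= z < b -> I z) /\ (forall z, I z -> z < b).
Proof. intros HB HM Hx0 Hx1 Hlt. pose proof HM as [C [IB M]].
  set (E := fun z => I z /\ x0 <= z).
  assert (Hbd : forall z, I z -> z < x1).
  { intros z Hz. destruct (Rlt_dec z x1); auto. exfalso. apply Hx1. apply (C x0 x1 z); auto. lra. }
  destruct (completeness E) as [b Hb].
  { exists x1. intros z [Hz _]. left. auto. }
  { exists x0. split; auto. lra. }
  pose proof Hb as [Hub Hlub].
  assert (Hlt_b : forall z, I z -> z < b).
  { intros z Hz. destruct (Rle_dec x0 z).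
    - destruct (maxconv_open B I z HB HM Hz) as [rr [Hr Hr']].
      assert (E (z + rr/2)). { split; [|lra]. apply Hr'. replace (z + rr/2 - z) with (rr/2) by ring.
        rewrite Rabs_right; lra. }
      specialize (Hub _ H). lra.
    - assert (x0 <= b) by (apply Hub; split; auto; lra). lra. }
  assert (Hin : forall z, x0 <= z < b -> I z).
  { intros z Hz. destruct (lub_approx E b (b - z) Hb ltac:(lra)) as [w [[Hw1 Hw2] Hw3]].
    apply (C x0 z w); auto. lra. }
  exists b. split; [split|split; [|split]].
  - apply Hlt_b; auto.
  - apply Hlub. intros z [Hz _]. left. auto.
  - intro Bb. destruct (HB b Bb) as [r [Hr Hr']].
    destruct (lub_approx E b r Hb Hr) as [w [[Hw1 Hw2] Hw3]].
    assert (Hwb : w < b) by auto.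
    assert (I (b + r/2)).
    { apply (M (fun z => I z \/ Rabs (z - b) < r)).
      - apply (convex_union I (fun z => Rabs (z - b) < r) w C); auto.
        + intros a c d Ha Hd Hc. apply Rabs_def2 in Ha. apply Rabs_def2 in Hd. apply Rabs_def1; lra.
        + apply Rabs_def1; lra.
      - intros z Hz; auto.
      - intros z [Hz|Hz]; auto.
      - right. apply Rabs_def1; lra. }
    specialize (Hlt_b _ H). lra.
  - exact Hin.
  - exact Hlt_b.
Qed.

Lemma gap_right B I f x0 x1 : openR B -> incr_on B f -> maxconv B I -> I x0 -> B x1 -> x0 < x1 ->
  (forall y, f x0 <= y <= f x1 -> exists z, B z /\ f z = y) -> I x1.
Proof. intros HB Hf HM Hx0 Bx1 Hlt Hsur. pose proof HM as [C [IB M]].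
  apply NNPP. intro Nx1.
  destruct (right_end B I x0 x1 HB HM Hx0 Nx1 Hlt) as [b [[Hb1 Hb2] [NBb [Hin Hltb]]]].
  set (E := fun w => exists z, x0 <= z < b /\ w = f z).
  destruct (completeness E) as [m Hm].
  { exists (f x1). intros w [z [Hz ->]]. left. apply Hf; auto. lra. }
  { exists (f x0). exists x0. split; auto. lra. }
  pose proof Hm as [Hub Hlub].
  assert (H0m : f x0 <= m). { apply Hub. exists x0. split; auto. lra. }
  assert (Hm1 : m <= f x1). { apply Hlub. intros w [z [Hz ->]]. left. apply Hf; auto. lra. }
  destruct (Hsur m (conj H0m Hm1)) as [xm [Bxm Exm]].
  destruct (Rtotal_order xm b) as [Hc|[Hc|Hc]].
  - assert (x0 <= xm). { destruct (Rle_dec x0 xm); auto.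
      assert (f xm < f x0) by (apply Hf; auto; lra). lra. }
    assert (Hz : I ((xm + b)/2)) by (apply Hin; lra).
    assert (f xm < f ((xm+b)/2)) by (apply Hf; auto; lra).
    assert (f ((xm+b)/2) <= m). { apply Hub. exists ((xm+b)/2). split; auto. lra. }
    lra.
  - subst. contradiction.
  - destruct (HB xm Bxm) as [r [Hr Hr']].
    set (w := xm - Rmin r (xm - b) / 2).
    assert (Hw : b < w < xm /\ Rabs (w - xm) < r).
    { unfold w. pose proof (Rmin_l r (xm - b)). pose proof (Rmin_r r (xm - b)).
      pose proof (Rmin_pos r (xm - b) Hr ltac:(lra)). split. lra. apply Rabs_def1; lra. }
    assert (Bw : B w) by (apply Hr'; tauto).
    assert (f w < m) by (rewrite <- Exm; apply Hf; auto; tauto).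
    destruct (lub_approx E m (m - f w) Hm ltac:(lra)) as [e [[z [Hz ->]] He]].
    assert (f z < f w). { apply Hf. apply IB; apply Hin; lra. auto. lra. }
    lra.
Qed.

Lemma gap_left B I f x0 x1 : openR B -> incr_on B f -> maxconv B I -> I x0 -> B x1 -> x1 < x0 ->
  (forall y, f x1 <= y <= f x0 -> exists z, B z /\ f z = y) -> I x1.
Proof. intros HB Hf HM Hx0 Bx1 Hlt Hsur. pose proof HM as [C [IB M]].
  set (B' := fun x => B (- x)). set (I' := fun x => I (- x)). set (f' := fun x => - f (- x)).
  assert (I' (- x1)).
  { apply (gap_right B' I' f' (- x0) (- x1)).
    - intros x Hx. destruct (HB (-x) Hx) as [r [Hr Hr']]. exists r. split; auto.
      intros x' Hx'. apply Hr'. replace (- x' - - x) with (- (x' - x)) by ring. rewrite Rabs_Ropp. auto.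
    - intros x y Hx Hy Hxy. unfold f'. assert (f (- y) < f (- x)) by (apply Hf; auto; lra). lra.
    - split; [|split].
      + intros a b c Ha Hc Hb. apply (C (- c) (- b) (- a)); auto. lra.
      + intros x Hx. apply IB. auto.
      + intros J CJ HJ JB x Hx. unfold I'. replace x with (- - x) in Hx by ring.
        apply (M (fun z => J (- z))); auto.
        * intros a b c Ha Hc Hb. apply (CJ (- c) (- b) (- a)); auto. lra.
        * intros z Hz. apply HJ. unfold I'. replace (- - z) with z by ring. auto.
        * intros z Hz. apply JB in Hz. unfold B' in Hz. replace (- - z) with z in Hz by ring. auto.
    - unfold I'. replace (- - x0) with x0 by ring. auto.
    - unfold B'. replace (- - x1) with x1 by ring. auto.
    - lra.
    - intros y Hy. unfold f' in Hy. rewrite !Ropp_involutive in Hy.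
      destruct (Hsur (- y) ltac:(lra)) as [z [Bz Ez]]. exists (- z). unfold B', f'.
      rewrite Ropp_involutive. split; auto. lra. }
  unfold I' in H. rewrite Ropp_involutive in H. auto.
Qed.

Definition ImgJ (F : R -> R -> R) (J : R*R -> Prop) (p : R*R) : Prop :=
  exists x, J (x, snd p) /\ F x (snd p) = fst p.

Lemma level_openR S u v t : is_strip S u v -> openR (fun x => S (x,t)).
Proof. intros Hs x Hx. destruct (level_open S u v x t Hs Hx) as [r [Hr H]]. exists r. split; auto. Qed.

Lemma BI_img S u v F J : Good S u v F -> boundary_interval S u v J ->
  boundary_interval (Img S F) u v (ImgJ F J).
Proof. intros G [t [I [Ht [[x0 Hx0] [C [IS [M HJ]]]]]]].
  pose proof G as [Hs [Hc [Hm Hsu]]].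
  assert (HB : openR (fun x => S (x,t))) by (eapply level_openR; eauto).
  assert (HMc : maxconv (fun x => S (x,t)) I) by (split; [|split]; auto).
  assert (Hf : incr_on (fun x => S (x,t)) (fun x => F x t)) by (intros a b Ha Hb H; apply Hm; auto).
  exists t, (fun y => exists x, I x /\ F x t = y). split; [auto|]. split; [|split; [|split; [|split]]].
  - exists (F x0 t). exists x0. auto.
  - intros y1 y y2 [x1 [H1 <-]] [x2 [H2 <-]] Hy.
    destruct (Req_dec y (F x1 t)) as [E|E]; [exists x1; auto|].
    destruct (Req_dec y (F x2 t)) as [E'|E']; [exists x2; auto|].
    assert (Hlt : x1 < x2). { apply (Good_mono_le S u v F x1 x2 t G (IS x1 H1) (IS x2 H2)). lra. }
    destruct (level_IVT S u v F x1 x2 y t G Hlt) as [z [Hz Ez]].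
    + intros z Hz. apply IS. apply (C x1 z x2); auto.
    + lra.
    + exists z. split; auto. apply (C x1 z x2); auto.
  - intros y [x [Hx <-]]. exists x. simpl. auto.
  - intros I'' CI'' Hsub HI'' y Hy.
    assert (Hy0 : I'' (F x0 t)) by (apply Hsub; exists x0; auto).
    destruct (HI'' y Hy) as [x1 [Hx1 Ex1]]. simpl in Hx1, Ex1.
    assert (Hsur : forall a b, I'' a -> I'' b -> forall w, a <= w <= b -> exists z, S (z,t) /\ F z t = w).
    { intros a b Ha Hb w Hw. destruct (HI'' w (CI'' a w b Ha Hb Hw)) as [z [Hz Ez]]. exists z. auto. }
    exists x1. split; auto.
    destruct (Rtotal_order x0 x1) as [L|[L|L]].
    + apply (gap_right _ I (fun x => F x t) x0 x1 HB Hf HMc Hx0 Hx1 L).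
      intros w Hw. apply (Hsur (F x0 t) y); auto. rewrite <- Ex1. auto.
    + subst. auto.
    + apply (gap_left _ I (fun x => F x t) x0 x1 HB Hf HMc Hx0 Hx1 L).
      intros w Hw. apply (Hsur y (F x0 t)); auto. rewrite <- Ex1. auto.
  - intros [y s]. unfold ImgJ. simpl. split.
    + intros [x [Hx E]]. apply HJ in Hx. simpl in Hx. destruct Hx as [Hx ->]. split; auto. exists x. auto.
    + intros [[x [Hx E]] ->]. exists x. split; auto. apply HJ. simpl. auto.
Qed.

Definition fmap (F : R -> R -> R) (p : R*R) : R*R := (F (fst p) (snd p), snd p).

Lemma Img_Inv_eq S u v F : Good S u v F -> Img (Img S F) (Inv S F) = S.
Proof. intros G. apply functional_extensionality. intro p. apply propositional_extensionality.
  apply (Img_Inv_iff S u v F p G). Qed.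

Lemma slice_cont S u v F : Good S u v F -> continuous_on open2 S open2 (Img S F) (fmap F).
Proof. intros G. pose proof G as [Hs [Hc [Hm Hsu]]]. split.
  - intros [x t] Hx. exists x. simpl. auto.
  - intros V HV.
    exists (fun p => exists p0 d, S p0 /\ 0 < d /\
      (forall p', S p' -> Rabs (fst p' - fst p0) < d -> Rabs (snd p' - snd p0) < d -> V (fmap F p')) /\
      Rabs (fst p - fst p0) < d /\ Rabs (snd p - snd p0) < d).
    split.
    + intros p [p0 [d [H0 [Hd [H1 [H2 H3]]]]]].
      exists (Rmin (d - Rabs (fst p - fst p0)) (d - Rabs (snd p - snd p0))). split.
      { apply Rmin_pos; lra. }
      intros p' E1 E2. exists p0, d. split; auto. split; auto. split; auto.
      pose proof (Rmin_l (d - Rabs (fst p - fst p0)) (d - Rabs (snd p - snd p0))).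
      pose proof (Rmin_r (d - Rabs (fst p - fst p0)) (d - Rabs (snd p - snd p0))).
      split.
      * replace (fst p' - fst p0) with ((fst p' - fst p) + (fst p - fst p0)) by ring.
        eapply Rle_lt_trans. apply Rabs_triang. lra.
      * replace (snd p' - snd p0) with ((snd p' - snd p) + (snd p - snd p0)) by ring.
        eapply Rle_lt_trans. apply Rabs_triang. lra.
    + intros [x t] Hx. split.
      * intros HVx. destruct (HV _ HVx) as [e [He He']]. simpl in He'.
        destruct (Hc x t Hx e He) as [d [Hd Hd']].
        exists (x,t), (Rmin d e). split; auto. split; [apply Rmin_pos; lra|]. split.
        { intros [x' t'] Hp' E1 E2. simpl in *. unfold fmap. apply He'; simpl.
          apply Hd'; auto. eapply Rlt_le_trans; eauto. apply Rmin_l. eapply Rlt_le_trans; eauto. apply Rmin_l.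
          eapply Rlt_le_trans; eauto. apply Rmin_r. }
        simpl. split; apply Rabs_self; apply Rmin_pos; lra.
      * intros [p0 [d [H0 [Hd [H1 [H2 H3]]]]]]. apply H1; auto.
Qed.

Lemma slice_cont_inv S u v F : Good S u v F -> continuous_on open2 (Img S F) open2 S (fmap (Inv S F)).
Proof. intros G. pose proof (slice_cont _ _ _ _ (Inv_good S u v F G)) as H.
  rewrite (Img_Inv_eq S u v F G) in H. exact H. Qed.

Definition lmap {L : Type} (f : L -> R*R -> R*R) (x : L * (R*R)) : L * (R*R) := (fst x, f (fst x) (snd x)).

Lemma lift_cont {L : Type} (A B : L -> R*R -> Prop) (f : L -> R*R -> R*R) :
  (forall l, continuous_on open2 (A l) open2 (B l) (f l)) ->
  continuous_on opnP (S0 A) opnP (S0 B) (lmap f).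
Proof. intros Hc. split.
  - intros [l p] Hx. unfold S0, lmap in *. simpl in *. apply (proj1 (Hc l)). auto.
  - intros V HV.
    exists (fun x => exists W, open2 W /\ (forall p, A (fst x) p -> (V (fst x, f (fst x) p) <-> W p)) /\ W (snd x)).
    split.
    + intros l p [W [HW [HW1 HW2]]]. simpl in *. destruct (HW p HW2) as [e [He He']].
      exists e. split; auto. intros p' E1 E2. exists W. simpl. split; auto.
    + intros [l p] Hx. unfold S0, lmap in *. simpl in *. split.
      * intros HVx. destruct (proj2 (Hc l) (fun p => V (l,p)) (HV l)) as [W [HW HW']].
        exists W. simpl. split; auto. split; auto. apply HW'; auto.
      * intros [W [HW [HW1 HW2]]]. simpl in *. apply HW1; auto.
Qed.

Lemma sub_open_transfer {T T' : Type} (opn : (T -> Prop) -> Prop) (opn' : (T' -> Prop) -> Prop)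
  (A : T -> Prop) (B : T' -> Prop) (f : T -> T') (g : T' -> T) (W : T -> Prop) :
  continuous_on opn A opn' B f -> continuous_on opn' B opn A g -> (forall x, A x -> g (f x) = x) ->
  (sub_open opn A W <-> sub_open opn' B (fun y => W (g y))).
Proof. intros [Af Cf] [Bg Cg] Hgf. split.
  - intros [U [HU HUW]]. destruct (Cg U HU) as [U' [HU' HU'W]]. exists U'. split; auto.
    intros y Hy. rewrite (HUW (g y) (Bg y Hy)). apply HU'W; auto.
  - intros [U [HU HUW]]. destruct (Cf U HU) as [U' [HU' HU'W]]. exists U'. split; auto.
    intros x Hx. rewrite <- (HU'W x Hx). rewrite <- (HUW (f x) (Af x Hx)). rewrite Hgf; tauto.
Qed.

Section T.
Context {L Z : Type} (S : L -> R*R -> Prop) (u v : L -> R) (Phi : L -> R -> R -> R).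
Hypothesis HG : forall l, Good (S l) (u l) (v l) (Phi l).

Definition S' := fun l => Img (S l) (Phi l).
Definition hP := lmap (fun l => fmap (Phi l)).
Definition gP := lmap (fun l => fmap (Inv (S l) (Phi l))).
Definition imgB (b : L * (R*R -> Prop)) : L * (R*R -> Prop) := (fst b, ImgJ (Phi (fst b)) (snd b)).

Lemma cont_h : continuous_on opnP (S0 S) opnP (S0 S') hP.
Proof. apply lift_cont. intros l. apply (slice_cont _ (u l) (v l)). auto. Qed.

Lemma cont_g : continuous_on opnP (S0 S') opnP (S0 S) gP.
Proof. apply lift_cont. intros l. apply (slice_cont_inv _ (u l) (v l)). auto. Qed.

Lemma gh x : S0 S x -> gP (hP x) = x.
Proof. destruct x as [l [x t]]. unfold S0. simpl. intros Hx. unfold gP, hP, lmap, fmap. simpl.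
  rewrite (Inv_F (S l) (u l) (v l) (Phi l) x t (HG l) Hx). auto. Qed.

Lemma hg y : S0 S' y -> hP (gP y) = y.
Proof. destruct y as [l [y t]]. unfold S0, S'. simpl. intros Hy. unfold gP, hP, lmap, fmap. simpl.
  destruct (Inv_spec (S l) (Phi l) y t Hy) as [_ E]. rewrite E. auto. Qed.

Lemma hS x : S0 S x -> S0 S' (hP x).
Proof. apply (proj1 cont_h). Qed.
Lemma gS y : S0 S' y -> S0 S (gP y).
Proof. apply (proj1 cont_g). Qed.

Lemma homeo_h : homeo_on opnP (S0 S) opnP (S0 S') hP.
Proof. exists gP. split; [apply cont_h|]. split; [apply cont_g|]. split. apply gh. apply hg. Qed.

Lemma inB_imgB b y : inB (imgB b) y <-> exists x, inB b x /\ hP x = y.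
Proof. destruct y as [l [y t]]. unfold inB, imgB, ImgJ. simpl. split.
  - intros [-> [x [Hx E]]]. exists (fst b, (x,t)). simpl. split; auto. unfold hP, lmap, fmap. simpl. rewrite E. auto.
  - intros [[l' [x t']] [[E1 E2] E3]]. simpl in *. unfold hP, lmap, fmap in E3. simpl in E3.
    inversion E3. subst. split; auto. exists x. auto.
Qed.

Lemma bi_sub l J p : boundary_interval (S l) (u l) (v l) J -> J p -> S l p.
Proof. intros [t [I [_ [_ [_ [IS [_ HJ]]]]]]] Hp. apply HJ in Hp. destruct p as [x t']. simpl in Hp.
  destruct Hp as [Hp ->]. auto. Qed.

Lemma inB_S0 b x : boundary_interval (S (fst b)) (u (fst b)) (v (fst b)) (snd b) -> inB b x -> S0 S x.
Proof. intros Hb [E Hx]. unfold S0. rewrite E. eapply bi_sub; eauto. Qed.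

Lemma imgJ_incl l J1 J2 : (forall p, J1 p -> S l p) -> (forall p, J2 p -> S l p) ->
  (forall p, ImgJ (Phi l) J1 p -> ImgJ (Phi l) J2 p) -> forall p, J1 p -> J2 p.
Proof. intros S1 S2 Himp [x t] Hp.
  destruct (Himp (Phi l x t, t)) as [x' [Hx' Ex']]. { exists x. simpl. auto. }
  simpl in *. assert (x' = x).
  { apply (Good_inj (S l) (u l) (v l) (Phi l) x' x t (HG l)). apply S2; exact Hx'. apply S1; exact Hp. exact Ex'. }
  subst x'. exact Hx'. Qed.

Lemma same_bi_back b1 b2 : boundary_interval (S (fst b1)) (u (fst b1)) (v (fst b1)) (snd b1) ->
  boundary_interval (S (fst b2)) (u (fst b2)) (v (fst b2)) (snd b2) ->
  same_bi (imgB b1) (imgB b2) -> same_bi b1 b2.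
Proof. destruct b1 as [l1 J1], b2 as [l2 J2]. unfold imgB, same_bi. simpl. intros H1 H2 [E HE]. subst l2.
  assert (A1: forall p, J1 p -> S l1 p) by (intros p Hp; apply (bi_sub l1 J1 p H1 Hp)).
  assert (A2: forall p, J2 p -> S l1 p) by (intros p Hp; apply (bi_sub l1 J2 p H2 Hp)).
  split; auto. intros p. split.
  exact (imgJ_incl l1 J1 J2 A1 A2 (fun p => proj1 (HE p)) p).
  exact (imgJ_incl l1 J2 J1 A2 A1 (fun p => proj2 (HE p)) p).
Qed.

Lemma image_imgB (q : L * (R*R) -> Z) b z :
  boundary_interval (S (fst b)) (u (fst b)) (v (fst b)) (snd b) ->
  (image (fun y => q (gP y)) (inB (imgB b)) z <-> image q (inB b) z).
Proof. intros Hb. split.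
  - intros [y [Hy <-]]. apply inB_imgB in Hy. destruct Hy as [x [Hx <-]]. exists x. split; auto.
    rewrite gh; auto. eapply inB_S0; eauto.
  - intros [x [Hx <-]]. exists (hP x). split. apply inB_imgB. exists x; auto.
    rewrite gh; auto. eapply inB_S0; eauto.
Qed.

Lemma closed_emb_transport (opnZ : (Z -> Prop) -> Prop) (q : L * (R*R) -> Z) b :
  boundary_interval (S (fst b)) (u (fst b)) (v (fst b)) (snd b) ->
  closed_embedding opnZ q (inB b) -> closed_embedding opnZ (fun y => q (gP y)) (inB (imgB b)).
Proof. intros Hb [Inj [[_ Cq] [Op Cl]]].
  assert (Sb : forall x, inB b x -> S0 S x) by (intros; eapply inB_S0; eauto).
  split; [|split; [split|split]].
  - intros y1 y2 H1 H2 E. apply inB_imgB in H1. apply inB_imgB in H2.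
    destruct H1 as [x1 [H1 <-]]. destruct H2 as [x2 [H2 <-]].
    rewrite !gh in E by auto. f_equal. apply Inj; auto.
  - auto.
  - intros V HV. destruct (Cq V HV) as [U [HU HUV]].
    destruct (proj2 cont_g U HU) as [U' [HU' HU'V]].
    exists U'. split; auto. intros y Hy.
    pose proof Hy as Hy'. apply inB_imgB in Hy'. destruct Hy' as [x [Hx <-]].
    rewrite <- HU'V by (apply hS; auto). rewrite gh by auto. apply HUV; auto.
  - intros W [O [HO HOW]].
    destruct (proj2 cont_h O HO) as [O' [HO' HO'W]].
    destruct (Op (fun x => W (hP x))) as [U [HU HUe]].
    { exists O'. split; auto. intros x Hx. rewrite <- HO'W by auto. apply HOW.
      apply inB_imgB. exists x; auto. }
    exists U. split; auto. intros z. rewrite image_imgB by auto. rewrite <- HUe. split.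
    + intros [y [Hy [HWy <-]]]. apply inB_imgB in Hy. destruct Hy as [x [Hx <-]].
      exists x. split; auto. split; auto. rewrite gh; auto.
    + intros [x [Hx [HWx <-]]]. exists (hP x). split. apply inB_imgB; exists x; auto.
      split; auto. rewrite gh; auto.
  - assert (E : (fun z => ~ image (fun y => q (gP y)) (inB (imgB b)) z) = (fun z => ~ image q (inB b) z)).
    { apply functional_extensionality. intro z. apply propositional_extensionality.
      rewrite image_imgB by auto. tauto. }
    rewrite E. auto.
Qed.

Lemma transport (opnZ : (Z -> Prop) -> Prop) (G : Type) (q : L * (R*R) -> Z) (X Y : G -> L * (R*R -> Prop)) :
  striped_atlas_fam opnZ S u v q X Y ->
  striped_atlas_fam opnZ S' u v (fun y => q (gP y)) (fun g => imgB (X g)) (fun g => imgB (Y g)).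
Proof. intros [Hcnt [Hstr [Hsur [Htop [HX [HY [HXi [HYi [HXY [Hinj [Him [HXe HYe]]]]]]]]]]]].
  split; [auto|]. split.
  { intros l. apply (Img_strip _ _ _ _ (HG l)). }
  split.
  { intros z. destruct (Hsur z) as [x [Hx <-]]. exists (hP x). split. apply hS; auto. rewrite gh; auto. }
  split.
  { intros U. rewrite Htop. split; intros H l.
    - exact (proj1 (sub_open_transfer open2 open2 (S l) (S' l) (fmap (Phi l)) (fmap (Inv (S l) (Phi l)))
         (fun p => U (q (l,p))) (slice_cont _ _ _ _ (HG l)) (slice_cont_inv _ _ _ _ (HG l))
         (fun p Hp => f_equal snd (gh (l,p) Hp))) (H l)).
    - exact (proj2 (sub_open_transfer open2 open2 (S l) (S' l) (fmap (Phi l)) (fmap (Inv (S l) (Phi l)))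
         (fun p => U (q (l,p))) (slice_cont _ _ _ _ (HG l)) (slice_cont_inv _ _ _ _ (HG l))
         (fun p Hp => f_equal snd (gh (l,p) Hp))) (H l)). }
  split. { intros g. exact (BI_img _ _ _ _ _ (HG (fst (X g))) (HX g)). }
  split. { intros g. exact (BI_img _ _ _ _ _ (HG (fst (Y g))) (HY g)). }
  split. { intros g1 g2 E. apply HXi. apply same_bi_back; auto. }
  split. { intros g1 g2 E. apply HYi. apply same_bi_back; auto. }
  split. { intros g1 g2 E. apply (HXY g1 g2). apply same_bi_back; auto. }
  split.
  { intros y1 y2 H1 H2 N1 N2 E.
    rewrite <- (hg y1 H1). rewrite <- (hg y2 H2). f_equal. apply Hinj; auto.
    - apply gS; auto.
    - apply gS; auto.
    - intros g. split; intro N; [apply (proj1 (N1 g)) | apply (proj2 (N1 g))]; apply inB_imgB;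
        exists (gP y1); split; auto; apply hg; auto.
    - intros g. split; intro N; [apply (proj1 (N2 g)) | apply (proj2 (N2 g))]; apply inB_imgB;
        exists (gP y2); split; auto; apply hg; auto. }
  split.
  { intros g z. rewrite !image_imgB; auto. }
  split.
  { intros g. apply closed_emb_transport; auto. }
  { intros g. apply closed_emb_transport; auto. }
Qed.

Lemma leaves_h : maps_leaves (S0_leaf S u v) (S0_leaf S' u v) hP.
Proof. intros Lf [l [L0 [HL0 HLf]]]. exists l, (ImgJ (Phi l) L0). split.
  - destruct HL0 as [[t [Ht HL]]|Hb].
    + left. exists t. split; auto. intros [y s]. unfold ImgJ. simpl. split.
      * intros [x [Hx _]]. apply HL in Hx. exact Hx.
      * intros ->. destruct (proj2 (proj2 (proj2 (HG l))) t Ht y) as [x Hx]. exists x. split; auto.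
        apply HL. simpl. auto.
    + right. apply BI_img; auto.
  - intros [l' [y s]]. unfold image, ImgJ. simpl. split.
    + intros [[l'' [x t]] [Hx E]]. apply HLf in Hx. simpl in Hx. destruct Hx as [-> Hx].
      unfold hP, lmap, fmap in E. simpl in E. inversion E. subst. split; auto. exists x. auto.
    + intros [-> [x [Hx E]]]. exists (l, (x, s)). split. apply HLf. simpl. auto.
      unfold hP, lmap, fmap. simpl. rewrite E. auto.
Qed.
End T.

Definition compF (F1 F2 : R -> R -> R) := fun x t => F2 (F1 x t) t.

Lemma comp_good S u v F1 F2 : Good S u v F1 -> Good (Img S F1) u v F2 -> Good S u v (compF F1 F2).
Proof. intros G1 G2. pose proof G1 as [Hs [Hc [Hm Hsu]]]. pose proof G2 as [Hs2 [Hc2 [Hm2 Hsu2]]].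
  assert (HI : forall x t, S (x,t) -> Img S F1 (F1 x t, t)) by (intros x t H; exists x; simpl; auto).
  split; [auto|split; [|split]].
  - intros x t Hx e He. destruct (Hc2 (F1 x t) t (HI x t Hx) e He) as [d2 [Hd2 Hd2']].
    destruct (Hc x t Hx d2 Hd2) as [d1 [Hd1 Hd1']].
    exists (Rmin d1 d2). split. apply Rmin_pos; auto.
    intros x' t' Hx' E1 E2. unfold compF. apply Hd2'; auto.
    apply Hd1'; auto. eapply Rlt_le_trans; eauto; apply Rmin_l. eapply Rlt_le_trans; eauto; apply Rmin_l.
    eapply Rlt_le_trans; eauto; apply Rmin_r.
  - intros x y t Hx Hy H. unfold compF. apply Hm2; auto.
  - intros t Ht y. destruct (Hsu2 t Ht y) as [z Hz]. destruct (Hsu t Ht z) as [x Hx].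
    exists x. unfold compF. rewrite Hx. auto.
Qed.

Lemma comp_img S F1 F2 : Img S (compF F1 F2) = Img (Img S F1) F2.
Proof. apply functional_extensionality. intros [y t]. apply propositional_extensionality.
  unfold Img, compF. simpl. split.
  - intros [x [Hx E]]. exists (F1 x t). split; auto. exists x. auto.
  - intros [z [[x [Hx <-]] E]]. exists x. auto.
Qed.

Lemma mono_surj_cont (H : R -> R) : (forall x y, x < y -> H x < H y) -> (forall y, exists x, H x = y) ->
  forall x e, 0 < e -> exists d, 0 < d /\ forall x', Rabs (x' - x) < d -> Rabs (H x' - H x) < e.
Proof. intros Hm Hs x e He.
  destruct (Hs (H x - e)) as [x1 E1]. destruct (Hs (H x + e)) as [x2 E2].
  assert (x1 < x). { destruct (Rlt_dec x1 x); auto. destruct (Req_dec x1 x). subst. lra.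
    assert (H x < H x1) by (apply Hm; lra). lra. }
  assert (x < x2). { destruct (Rlt_dec x x2); auto. destruct (Req_dec x2 x). subst. lra.
    assert (H x2 < H x) by (apply Hm; lra). lra. }
  exists (Rmin (x - x1) (x2 - x)). split. apply Rmin_pos; lra.
  intros x' Hx'. pose proof (Rmin_l (x - x1) (x2 - x)). pose proof (Rmin_r (x - x1) (x2 - x)).
  apply Rabs_def2 in Hx'. assert (H x1 < H x') by (apply Hm; lra). assert (H x' < H x2) by (apply Hm; lra).
  apply Rabs_def1; lra.
Qed.

Section Patch.
Context (K : Type) (P : K -> Prop) (a b : K -> R) (f : K -> R -> R).
Hypothesis disj : forall k1 k2 x, P k1 -> P k2 -> a k1 < x < b k1 -> a k2 < x < b k2 -> k1 = k2.
Hypothesis mono : forall k x y, P k -> a k < x -> x < y -> y < b k -> f k x < f k y.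
Hypothesis into : forall k x, P k -> a k < x < b k -> a k < f k x < b k.
Hypothesis onto : forall k y, P k -> a k < y < b k -> exists x, a k < x < b k /\ f k x = y.

Definition patch (x : R) : R :=
  match excluded_middle_informative (exists k, P k /\ a k < x < b k) with
  | left H => f (proj1_sig (constructive_indefinite_description _ H)) x
  | right _ => x
  end.

Lemma patch_in k x : P k -> a k < x < b k -> patch x = f k x.
Proof. intros Pk Hx. unfold patch. destruct excluded_middle_informative as [H|H].
  - destruct (constructive_indefinite_description _ H) as [k' [Pk' Hk']]. simpl.
    rewrite (disj k' k x); auto.
  - exfalso. apply H. exists k. auto.
Qed.

Lemma patch_out x : ~ (exists k, P k /\ a k < x < b k) -> patch x = x.
Proof. intros N. unfold patch. destruct excluded_middle_informative as [H|H]; auto. contradiction. Qed.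

Lemma disj_order k1 k2 x y : P k1 -> P k2 -> k1 <> k2 -> a k1 < x < b k1 -> a k2 < y < b k2 -> x < y -> b k1 <= a k2.
Proof. intros P1 P2 N H1 H2 Hxy. destruct (Rle_dec (b k1) (a k2)) as [E|E]; auto. exfalso.
  apply N. apply (disj k1 k2 ((Rmax x (a k2) + Rmin (b k1) y)/2)); auto;
  unfold Rmax, Rmin; repeat destruct Rle_dec; lra.
Qed.

Lemma patch_mono x y : x < y -> patch x < patch y.
Proof. intros Hxy.
  destruct (classic (exists k, P k /\ a k < x < b k)) as [[k1 [P1 H1]]|N1];
  destruct (classic (exists k, P k /\ a k < y < b k)) as [[k2 [P2 H2]]|N2].
  - rewrite (patch_in k1 x), (patch_in k2 y); auto.
    destruct (classic (k1 = k2)) as [E|E].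
    + subst. apply mono; tauto.
    + pose proof (disj_order k1 k2 x y P1 P2 E H1 H2 Hxy). pose proof (into k1 x P1 H1). pose proof (into k2 y P2 H2). lra.
  - rewrite (patch_in k1 x), (patch_out y); auto. pose proof (into k1 x P1 H1).
    assert (b k1 <= y). { destruct (Rle_dec (b k1) y); auto. exfalso. apply N2. exists k1. split; auto. lra. }
    lra.
  - rewrite (patch_out x), (patch_in k2 y); auto. pose proof (into k2 y P2 H2).
    assert (x <= a k2). { destruct (Rle_dec x (a k2)); auto. exfalso. apply N1. exists k2. split; auto. lra. }
    lra.
  - rewrite (patch_out x), (patch_out y); auto.
Qed.

Lemma patch_surj y : exists x, patch x = y /\ (forall k, P k -> a k < y < b k -> a k < x < b k) /\
   ((~ exists k, P k /\ a k < y < b k) -> x = y).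
Proof. destruct (classic (exists k, P k /\ a k < y < b k)) as [[k [Pk Hk]]|N].
  - destruct (onto k y Pk Hk) as [x [Hx E]]. exists x. split. rewrite (patch_in k x); auto.
    split. intros k' Pk' Hk'. rewrite (disj k' k y); auto. intro N. exfalso. apply N. exists k. auto.
  - exists y. split. apply patch_out; auto. split. intros k Pk Hk. exfalso. apply N. exists k. auto. auto.
Qed.

Lemma patch_cont x e : 0 < e -> exists d, 0 < d /\ forall x', Rabs (x' - x) < d -> Rabs (patch x' - patch x) < e.
Proof. intros He. apply mono_surj_cont; auto. exact patch_mono.
  intros y. destruct (patch_surj y) as [z [E _]]. exists z. auto. Qed.

Lemma patch_pres (B : R -> Prop) : (forall k x, P k -> a k < x < b k -> B x) ->
  (forall x, B x -> B (patch x)) /\ (forall y, B y -> exists x, B x /\ patch x = y).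
Proof. intros HB. split.
  - intros x Bx. destruct (classic (exists k, P k /\ a k < x < b k)) as [[k [Pk Hk]]|N].
    + rewrite (patch_in k x Pk Hk). apply (HB k). auto. apply into; auto.
    + rewrite patch_out; auto.
  - intros y By. destruct (patch_surj y) as [x [E [H1 H2]]]. exists x. split; auto.
    destruct (classic (exists k, P k /\ a k < y < b k)) as [[k [Pk Hk]]|N].
    + apply (HB k); auto.
    + rewrite H2; auto.
Qed.
End Patch.

Definition lam (u v t : R) := (t - u) / (v - u).
Definition interp (u v : R) (Hu Hv : R -> R) := fun x t => (1 - lam u v t) * Hu x + lam u v t * Hv x.

Lemma lam_range u v t : u < v -> u <= t <= v -> 0 <= lam u v t <= 1.
Proof. intros. unfold lam. split.
  - apply Rmult_le_pos; [lra|]. left. apply Rinv_0_lt_compat. lra.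
  - apply (Rmult_le_reg_r (v - u)). lra. unfold Rdiv. rewrite Rmult_assoc, Rinv_l by lra. lra.
Qed.

Lemma lam_u u v : u < v -> lam u v u = 0.
Proof. intros. unfold lam. unfold Rdiv. replace (u - u) with 0 by ring. ring. Qed.
Lemma lam_v u v : u < v -> lam u v v = 1.
Proof. intros. unfold lam. field. lra. Qed.

Lemma interp_u u v Hu Hv x : u < v -> interp u v Hu Hv x u = Hu x.
Proof. intros. unfold interp. rewrite lam_u by auto. ring. Qed.
Lemma interp_v u v Hu Hv x : u < v -> interp u v Hu Hv x v = Hv x.
Proof. intros. unfold interp. rewrite lam_v by auto. ring. Qed.

Lemma lam_diff u v t t' : u < v -> Rabs (lam u v t' - lam u v t) = Rabs (t' - t) / (v - u).
Proof. intros. unfold lam. replace ((t' - u) / (v - u) - (t - u) / (v - u)) with ((t' - t) / (v - u)) by (field; lra).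
  unfold Rdiv. rewrite Rabs_mult. rewrite (Rabs_right (/ (v - u))). auto. left. apply Rinv_0_lt_compat. lra. Qed.

Lemma comb_lt l a b c : 0 <= l <= 1 -> a < c -> b < c -> (1 - l) * a + l * b < c.
Proof. intros Hl Ha Hb. assert (0 <= (1 - l) * (c - a)) by (apply Rmult_le_pos; lra).
  assert (0 <= l * (c - b)) by (apply Rmult_le_pos; lra).
  destruct (Rlt_dec l 1).
  + assert (0 < (1 - l) * (c - a)) by (apply Rmult_lt_0_compat; lra). lra.
  + assert (0 < l * (c - b)) by (apply Rmult_lt_0_compat; lra). lra. Qed.

Lemma comb_gt l a b c : 0 <= l <= 1 -> c < a -> c < b -> c < (1 - l) * a + l * b.
Proof. intros Hl Ha Hb. assert (0 <= (1 - l) * (a - c)) by (apply Rmult_le_pos; lra).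
  assert (0 <= l * (b - c)) by (apply Rmult_le_pos; lra).
  destruct (Rlt_dec l 1).
  + assert (0 < (1 - l) * (a - c)) by (apply Rmult_lt_0_compat; lra). lra.
  + assert (0 < l * (b - c)) by (apply Rmult_lt_0_compat; lra). lra. Qed.

Lemma interp_good S u v Hu Hv : is_strip S u v ->
  (forall x y, x < y -> Hu x < Hu y) -> (forall y, exists x, Hu x = y) ->
  (forall x y, x < y -> Hv x < Hv y) -> (forall y, exists x, Hv x = y) ->
  Good S u v (interp u v Hu Hv).
Proof. intros Hs Mu Su Mv Sv. pose proof Hs as [Huv _].
  pose proof (mono_surj_cont Hu Mu Su) as Cu. pose proof (mono_surj_cont Hv Mv Sv) as Cv.
  split; [auto|split; [|split]].
  - intros x t Hx e He.
    set (M := Rabs (Hv x - Hu x) + 1).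
    assert (HM : 0 < M) by (unfold M; pose proof (Rabs_pos (Hv x - Hu x)); lra).
    destruct (Cu x (e/3) ltac:(lra)) as [d1 [Hd1 Hd1']].
    destruct (Cv x (e/3) ltac:(lra)) as [d2 [Hd2 Hd2']].
    set (d3 := e * (v - u) / (3 * M)).
    assert (Hd3 : 0 < d3). { unfold d3. apply Rmult_lt_0_compat. nra. apply Rinv_0_lt_compat. lra. }
    exists (Rmin (Rmin d1 d2) d3). split. repeat apply Rmin_pos; auto.
    intros x' t' Hx' E1 E2.
    pose proof (Rmin_l (Rmin d1 d2) d3). pose proof (Rmin_r (Rmin d1 d2) d3).
    pose proof (Rmin_l d1 d2). pose proof (Rmin_r d1 d2).
    specialize (Hd1' x' ltac:(lra)). specialize (Hd2' x' ltac:(lra)).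
    assert (Hl' : 0 <= lam u v t' <= 1) by (apply lam_range; auto; eapply strip_bounds; eauto).
    assert (Hld : Rabs (lam u v t' - lam u v t) * Rabs (Hv x - Hu x) < e/3).
    { rewrite lam_diff by auto.
      assert (Rabs (t' - t) / (v - u) < e / (3 * M)).
      { apply (Rmult_lt_reg_r (v - u)). lra. unfold Rdiv. rewrite Rmult_assoc, Rinv_l by lra.
        rewrite Rmult_1_r. replace (e * / (3 * M) * (v - u)) with d3 by (unfold d3; field; lra). lra. }
      assert (0 <= Rabs (t' - t) / (v - u)). { unfold Rdiv. apply Rmult_le_pos. apply Rabs_pos. left. apply Rinv_0_lt_compat. lra. }
      assert (Rabs (Hv x - Hu x) < M) by (unfold M; lra).
      pose proof (Rabs_pos (Hv x - Hu x)).
      replace (e/3) with (e / (3 * M) * M) by (field; lra).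
      set (al := e / (3 * M)) in *. set (aa := Rabs (t' - t) / (v - u)) in *. set (bb := Rabs (Hv x - Hu x)) in *.
      assert (0 <= (al - aa) * M) by (apply Rmult_le_pos; lra).
      assert (0 <= aa * (M - bb)) by (apply Rmult_le_pos; lra).
      assert (0 < (al - aa) * M) by (apply Rmult_lt_0_compat; lra).
      nra. }
    unfold interp.
    replace ((1 - lam u v t') * Hu x' + lam u v t' * Hv x' - ((1 - lam u v t) * Hu x + lam u v t * Hv x))
      with ((1 - lam u v t') * (Hu x' - Hu x) + lam u v t' * (Hv x' - Hv x) + (lam u v t' - lam u v t) * (Hv x - Hu x)) by ring.
    eapply Rle_lt_trans. apply Rabs_triang. eapply Rle_lt_trans. apply Rplus_le_compat_r. apply Rabs_triang.
    rewrite !Rabs_mult. rewrite (Rabs_right (1 - lam u v t')) by lra. rewrite (Rabs_right (lam u v t')) by lra.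
    assert ((1 - lam u v t') * Rabs (Hu x' - Hu x) <= (1 - lam u v t') * (e/3)) by (apply Rmult_le_compat_l; lra).
    assert (lam u v t' * Rabs (Hv x' - Hv x) <= lam u v t' * (e/3)) by (apply Rmult_le_compat_l; lra).
    nra.
  - intros x y t Hx Hy Hxy.
    assert (Hl : 0 <= lam u v t <= 1) by (apply lam_range; auto; eapply strip_bounds; eauto).
    unfold interp. specialize (Mu x y Hxy). specialize (Mv x y Hxy).
    assert (0 <= (1 - lam u v t) * (Hu y - Hu x)) by (apply Rmult_le_pos; lra).
    assert (0 <= lam u v t * (Hv y - Hv x)) by (apply Rmult_le_pos; lra).
    destruct (Rlt_dec (lam u v t) 1).
    + assert (0 < (1 - lam u v t) * (Hu y - Hu x)) by (apply Rmult_lt_0_compat; lra). lra.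
    + assert (0 < lam u v t * (Hv y - Hv x)) by (apply Rmult_lt_0_compat; lra). lra.
  - intros t Ht y.
    assert (Hl : 0 <= lam u v t <= 1) by (apply lam_range; auto; lra).
    destruct (Su y) as [x1 E1]. destruct (Sv y) as [x2 E2].
    set (lo := Rmin x1 x2 - 1). set (hi := Rmax x1 x2 + 1).
    assert (Hlo : lo < x1 /\ lo < x2) by (unfold lo; pose proof (Rmin_l x1 x2); pose proof (Rmin_r x1 x2); lra).
    assert (Hhi : x1 < hi /\ x2 < hi) by (unfold hi; pose proof (Rmax_l x1 x2); pose proof (Rmax_r x1 x2); lra).
    destruct (myIVT (fun x => interp u v Hu Hv x t) lo hi y) as [z [_ Ez]].
    + lra.
    + intros x _ e He. destruct (Cu x e He) as [d1 [Hd1 Hd1']]. destruct (Cv x e He) as [d2 [Hd2 Hd2']].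
      exists (Rmin d1 d2). split. apply Rmin_pos; auto. intros x' _ Hx'.
      specialize (Hd1' x' ltac:(eapply Rlt_le_trans; eauto; apply Rmin_l)).
      specialize (Hd2' x' ltac:(eapply Rlt_le_trans; eauto; apply Rmin_r)).
      unfold interp.
      replace ((1 - lam u v t) * Hu x' + lam u v t * Hv x' - ((1 - lam u v t) * Hu x + lam u v t * Hv x))
        with ((1 - lam u v t) * (Hu x' - Hu x) + lam u v t * (Hv x' - Hv x)) by ring.
      eapply Rle_lt_trans. apply Rabs_triang. rewrite !Rabs_mult.
      rewrite (Rabs_right (1 - lam u v t)) by lra. rewrite (Rabs_right (lam u v t)) by lra.
      assert ((1 - lam u v t) * Rabs (Hu x' - Hu x) <= (1 - lam u v t) * e) by (apply Rmult_le_compat_l; lra).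
      assert (lam u v t * Rabs (Hv x' - Hv x) <= lam u v t * e) by (apply Rmult_le_compat_l; lra).
      nra.
    + unfold interp. pose proof (Mu lo x1 (proj1 Hlo)). pose proof (Mv lo x2 (proj2 Hlo)).
      pose proof (Mu x1 hi (proj1 Hhi)). pose proof (Mv x2 hi (proj2 Hhi)). subst y.
      split; [apply comb_lt|apply comb_gt]; auto; lra.
    + exists z. exact Ez.
Qed.

Lemma interp_img S u v Hu Hv : Good S u v (interp u v Hu Hv) ->
  (forall x, S (x,u) -> S (Hu x, u)) -> (forall y, S (y,u) -> exists x, S (x,u) /\ Hu x = y) ->
  (forall x, S (x,v) -> S (Hv x, v)) -> (forall y, S (y,v) -> exists x, S (x,v) /\ Hv x = y) ->
  Img S (interp u v Hu Hv) = S.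
Proof. intros G P1 P2 P3 P4. pose proof G as [Hs [_ [_ Hsu]]]. pose proof Hs as [Huv [Hint _]].
  apply functional_extensionality. intros [y t]. apply propositional_extensionality. unfold Img. simpl. split.
  - intros [x [Hx E]]. pose proof (strip_bounds _ _ _ _ _ Hs Hx).
    destruct (Req_dec t u) as [->|Nu]. { rewrite interp_u in E by auto. subst. auto. }
    destruct (Req_dec t v) as [->|Nv]. { rewrite interp_v in E by auto. subst. auto. }
    apply Hint. lra.
  - intros Hy. pose proof (strip_bounds _ _ _ _ _ Hs Hy).
    destruct (Req_dec t u) as [->|Nu]. { destruct (P2 y Hy) as [x [Hx E]]. exists x. rewrite interp_u by auto. auto. }
    destruct (Req_dec t v) as [->|Nv]. { destruct (P4 y Hy) as [x [Hx E]]. exists x. rewrite interp_v by auto. auto. }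
    destruct (Hsu t ltac:(lra) y) as [x Hx]. exists x. split; auto. apply Hint. lra.
Qed.

Lemma Rabs_def2b x M : Rabs x <= M -> - M <= x <= M.
Proof. unfold Rabs; destruct Rcase_abs; lra. Qed.

Lemma open_bounded_convex (I : R -> Prop) M : openR I -> convex I -> (exists x, I x) -> (forall x, I x -> Rabs x <= M) ->
  exists a b, a < b /\ forall x, I x <-> a < x < b.
Proof. intros HO C [x0 Hx0] Hb.
  destruct (completeness I) as [b Hbl].
  { exists M. intros z Hz. specialize (Hb z Hz). apply Rabs_def2b in Hb. lra. }
  { exists x0; auto. }
  destruct (completeness (fun z => I (- z))) as [a' Hal].
  { exists M. intros z Hz. specialize (Hb _ Hz). rewrite Rabs_Ropp in Hb. apply Rabs_def2b in Hb. lra. }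
  { exists (- x0). rewrite Ropp_involutive. auto. }
  assert (K : forall x, I x -> - a' < x < b).
  { intros x Hx. destruct (HO x Hx) as [r [Hr Hr']]. split.
    - assert (I (x - r/2)) by (apply Hr'; apply Rabs_def1; lra).
      assert (- (x - r/2) <= a') by (apply (proj1 Hal); rewrite Ropp_involutive; auto). lra.
    - assert (I (x + r/2)) by (apply Hr'; apply Rabs_def1; lra).
      assert (x + r/2 <= b) by (apply (proj1 Hbl); auto). lra. }
  exists (- a'), b. split. { specialize (K x0 Hx0). lra. }
  intros x. split; auto. intros Hx.
  destruct (lub_approx I b (b - x) Hbl ltac:(lra)) as [w [Hw Hw']].
  destruct (lub_approx (fun z => I (- z)) a' (a' + x) Hal ltac:(lra)) as [w' [Hw1 Hw2]].
  apply (C (- w') x w); auto. lra.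
Qed.

Lemma bi_interval S u v J : is_strip S u v -> (exists M, forall p, J p -> Rabs (fst p) <= M) ->
  boundary_interval S u v J ->
  exists a b t, a < b /\ (t = u \/ t = v) /\ forall p, J p <-> (a < fst p < b /\ snd p = t).
Proof. intros Hs [M HM] [t [I [Ht [Hne [C [IS [Mx HJ]]]]]]].
  assert (HO : openR I).
  { intros x Hx. apply (maxconv_open (fun z => S (z,t)) I x); auto.
    eapply level_openR; eauto. split; auto. }
  destruct (open_bounded_convex I M HO C Hne) as [a [b [Hab HI]]].
  { intros x Hx. apply (HM (x,t)). apply HJ. simpl. auto. }
  exists a, b, t. split; auto. split; auto. intros p. rewrite HJ. rewrite HI. tauto.
Qed.

Lemma bi_meet S u v J1 J2 p : boundary_interval S u v J1 -> boundary_interval S u v J2 -> J1 p -> J2 p ->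
  forall p', J1 p' <-> J2 p'.
Proof. intros [t1 [I1 [Ht1 [Hne1 [C1 [IS1 [M1 HJ1]]]]]]] [t2 [I2 [Ht2 [Hne2 [C2 [IS2 [M2 HJ2]]]]]]] H1 H2.
  apply HJ1 in H1. apply HJ2 in H2. destruct H1 as [H1 E1]. destruct H2 as [H2 E2]. rewrite E1 in E2. subst t2.
  assert (CU : convex (fun z => I1 z \/ I2 z)) by (apply (convex_union I1 I2 (fst p)); auto).
  assert (US : forall z, I1 z \/ I2 z -> S (z, t1)) by (intros z [Hz|Hz]; auto).
  assert (A : forall z, I2 z -> I1 z) by (intros z Hz; apply (M1 _ CU); auto).
  assert (B : forall z, I1 z -> I2 z).
  { intros z Hz. apply (M2 (fun z => I1 z \/ I2 z)); auto. }
  intros p'. rewrite HJ1, HJ2. split; intros [Hp' Ep']; split; auto.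
Qed.

Definition bn (J : R*R -> Prop) : R*(R*R) := epsilon (inhabits (0,(0,0)))
  (fun w => fst w < fst (snd w) /\ forall p, J p <-> (fst w < fst p < fst (snd w) /\ snd p = snd (snd w))).
Definition ba J := fst (bn J).
Definition bb J := fst (snd (bn J)).
Definition bt J := snd (snd (bn J)).

Lemma bn_spec J : (exists a b t, a < b /\ forall p, J p <-> (a < fst p < b /\ snd p = t)) ->
  ba J < bb J /\ forall p, J p <-> (ba J < fst p < bb J /\ snd p = bt J).
Proof. intros [a [b [t [Hab H]]]]. unfold ba, bb, bt, bn.
  apply (epsilon_spec (inhabits (0,(0,0)))
    (fun w => fst w < fst (snd w) /\ forall p, J p <-> (fst w < fst p < fst (snd w) /\ snd p = snd (snd w)))).
  exists (a,(b,t)). simpl. auto.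
Qed.

Lemma model_bn S u v J : model_strip S u v -> boundary_interval S u v J ->
  ba J < bb J /\ (forall p, J p <-> (ba J < fst p < bb J /\ snd p = bt J)) /\ (bt J = u \/ bt J = v).
Proof. intros [Hs [Hbd _]] HJ. destruct (bi_interval S u v J Hs (Hbd J HJ) HJ) as [a [b [t [Hab [Ht H]]]]].
  destruct (bn_spec J) as [H1 H2]. { exists a, b, t. auto. }
  split; auto. split; auto.
  assert (E : bt J = t).
  { assert (J ((a+b)/2, t)) by (apply H; simpl; split; [lra|auto]).
    apply H2 in H0. simpl in H0. destruct H0. auto. }
  rewrite E. auto.
Qed.

Lemma bi_sub' S u v J p : boundary_interval S u v J -> J p -> S p.
Proof. intros [t [I [_ [_ [_ [IS [_ HJ]]]]]]] Hp. apply HJ in Hp. destruct p as [x t']. simpl in Hp.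
  destruct Hp as [Hp ->]. auto. Qed.

Section Glue.
Context {L Z G : Type} (opnZ : (Z -> Prop) -> Prop) (S : L -> R*R -> Prop) (u v : L -> R)
  (q : L * (R*R) -> Z) (X Y : G -> L * (R*R -> Prop)).
Hypothesis Hfam : striped_atlas_fam opnZ S u v q X Y.
Hypothesis Hmod : forall l, model_strip (S l) (u l) (v l).

Lemma fam_X g : boundary_interval (S (fst (X g))) (u (fst (X g))) (v (fst (X g))) (snd (X g)).
Proof. apply Hfam. Qed.
Lemma fam_Y g : boundary_interval (S (fst (Y g))) (u (fst (Y g))) (v (fst (Y g))) (snd (Y g)).
Proof. apply Hfam. Qed.

Definition aX g := ba (snd (X g)). Definition bX g := bb (snd (X g)). Definition tX g := bt (snd (X g)).
Definition aY g := ba (snd (Y g)). Definition bY g := bb (snd (Y g)). Definition tY g := bt (snd (Y g)).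

Lemma X_spec g : aX g < bX g /\ (forall p, snd (X g) p <-> (aX g < fst p < bX g /\ snd p = tX g)) /\
  (tX g = u (fst (X g)) \/ tX g = v (fst (X g))).
Proof. apply (model_bn (S (fst (X g))) (u (fst (X g))) (v (fst (X g)))). apply Hmod. apply fam_X. Qed.
Lemma Y_spec g : aY g < bY g /\ (forall p, snd (Y g) p <-> (aY g < fst p < bY g /\ snd p = tY g)) /\
  (tY g = u (fst (Y g)) \/ tY g = v (fst (Y g))).
Proof. apply (model_bn (S (fst (Y g))) (u (fst (Y g))) (v (fst (Y g)))). apply Hmod. apply fam_Y. Qed.

Lemma inBX g x : inB (X g) x <-> (fst x = fst (X g) /\ aX g < fst (snd x) < bX g /\ snd (snd x) = tX g).
Proof. unfold inB. rewrite (proj1 (proj2 (X_spec g))). tauto. Qed.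
Lemma inBY g x : inB (Y g) x <-> (fst x = fst (Y g) /\ aY g < fst (snd x) < bY g /\ snd (snd x) = tY g).
Proof. unfold inB. rewrite (proj1 (proj2 (Y_spec g))). tauto. Qed.

Definition phi g s := epsilon (inhabits 0) (fun x => aX g < x < bX g /\
   q (fst (X g), (x, tX g)) = q (fst (Y g), (s, tY g))).

Lemma Him g z : image q (inB (X g)) z <-> image q (inB (Y g)) z.
Proof. apply Hfam. Qed.
Lemma HXe g : closed_embedding opnZ q (inB (X g)).
Proof. apply Hfam. Qed.
Lemma HYe g : closed_embedding opnZ q (inB (Y g)).
Proof. apply Hfam. Qed.

Lemma phi_spec g s : aY g < s < bY g -> aX g < phi g s < bX g /\
   q (fst (X g), (phi g s, tX g)) = q (fst (Y g), (s, tY g)).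
Proof. intros Hs. unfold phi. apply (epsilon_spec (inhabits 0) (fun x => aX g < x < bX g /\
   q (fst (X g), (x, tX g)) = q (fst (Y g), (s, tY g)))).
  destruct (proj2 (Him g (q (fst (Y g), (s, tY g))))) as [[l [x t]] [Hx E]].
  { exists (fst (Y g), (s, tY g)). split; auto. apply inBY. simpl. auto. }
  apply inBX in Hx. simpl in Hx. destruct Hx as [-> [Hx ->]]. exists x. auto.
Qed.

Lemma qX_inj g x x' : aX g < x < bX g -> aX g < x' < bX g ->
  q (fst (X g), (x, tX g)) = q (fst (X g), (x', tX g)) -> x = x'.
Proof. intros H1 H2 E. destruct (HXe g) as [Inj _].
  assert (K := Inj (fst (X g), (x, tX g)) (fst (X g), (x', tX g)) ltac:(apply inBX; simpl; auto) ltac:(apply inBX; simpl; auto) E).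
  inversion K. auto. Qed.
Lemma qY_inj g x x' : aY g < x < bY g -> aY g < x' < bY g ->
  q (fst (Y g), (x, tY g)) = q (fst (Y g), (x', tY g)) -> x = x'.
Proof. intros H1 H2 E. destruct (HYe g) as [Inj _].
  assert (K := Inj (fst (Y g), (x, tY g)) (fst (Y g), (x', tY g)) ltac:(apply inBY; simpl; auto) ltac:(apply inBY; simpl; auto) E).
  inversion K. auto. Qed.

Lemma phi_inj g s s' : aY g < s < bY g -> aY g < s' < bY g -> phi g s = phi g s' -> s = s'.
Proof. intros H1 H2 E. destruct (phi_spec g s H1) as [_ E1]. destruct (phi_spec g s' H2) as [_ E2].
  apply (qY_inj g); auto. rewrite <- E1, <- E2, E. auto. Qed.

Lemma phi_surj g x : aX g < x < bX g -> exists s, aY g < s < bY g /\ phi g s = x.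
Proof. intros Hx. destruct (proj1 (Him g (q (fst (X g), (x, tX g))))) as [[l [s t]] [Hs E]].
  { exists (fst (X g), (x, tX g)). split; auto. apply inBX. simpl. auto. }
  apply inBY in Hs. simpl in Hs. destruct Hs as [-> [Hs ->]]. exists s. split; auto.
  destruct (phi_spec g s Hs) as [H1 H2]. apply (qX_inj g); auto. rewrite H2. auto.
Qed.

Lemma phi_cont g s0 : aY g < s0 < bY g -> forall e, 0 < e -> exists d, 0 < d /\
  forall s, aY g < s < bY g -> Rabs (s - s0) < d -> Rabs (phi g s - phi g s0) < e.
Proof. intros Hs0 e He.
  destruct (HXe g) as [_ [_ [Op _]]]. destruct (HYe g) as [_ [[_ Cq] _]].
  set (W := fun y : L * (R*R) => Rabs (fst (snd y) - phi g s0) < e).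
  destruct (Op W) as [U [HU HUe]].
  { exists W. split; [|intros; tauto]. intros l p Hp. exists (e - Rabs (fst p - phi g s0)). split. unfold W in Hp. simpl in Hp. lra.
    intros p' E1 E2. unfold W. simpl.
    replace (fst p' - phi g s0) with ((fst p' - fst p) + (fst p - phi g s0)) by ring.
    eapply Rle_lt_trans. apply Rabs_triang. lra. }
  destruct (phi_spec g s0 Hs0) as [P0 Q0].
  assert (U0 : U (q (fst (Y g), (s0, tY g)))).
  { apply (HUe (q (fst (Y g), (s0, tY g)))). exists (fst (X g), (phi g s0, tX g)). split.
    apply inBX; simpl; auto. split; auto. unfold W. simpl. apply Rabs_self; auto. }
  destruct (Cq U HU) as [O [HO HOe]].
  assert (O0 : O (fst (Y g), (s0, tY g))) by (apply HOe; auto; apply inBY; simpl; auto).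
  destruct (HO (fst (Y g)) (s0, tY g) O0) as [r [Hr Hr']].
  exists r. split; auto. intros s Hs Hss.
  assert (Os : O (fst (Y g), (s, tY g))) by (apply Hr'; simpl; auto; apply Rabs_self; auto).
  assert (Us : U (q (fst (Y g), (s, tY g)))) by (apply HOe; auto; apply inBY; simpl; auto).
  destruct (phi_spec g s Hs) as [P1 Q1].
  destruct (proj2 (HUe (q (fst (Y g), (s, tY g))))) as [[l [x1 t]] [Hx [Wx Ex]]].
  { split; auto. exists (fst (X g), (phi g s, tX g)). split; auto. apply inBX; simpl; auto. }
  apply inBX in Hx. simpl in Hx. destruct Hx as [-> [Hx1 ->]].
  assert (x1 = phi g s) by (apply (qX_inj g); auto; rewrite Ex, Q1; auto).
  subst x1. unfold W in Wx. simpl in Wx. auto.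
Qed.

Lemma path_in c d x y t : c < x < d -> c < y < d -> 0 <= t <= 1 -> c < x + t * (y - x) < d.
Proof. intros Hx Hy Ht. replace (x + t * (y - x)) with ((1 - t) * x + t * y) by ring.
  split; [apply comb_gt|apply comb_lt]; lra. Qed.

Lemma phi_mono g : (forall s s', aY g < s -> s < s' -> s' < bY g -> phi g s < phi g s') \/
                    (forall s s', aY g < s -> s < s' -> s' < bY g -> phi g s' < phi g s).
Proof. destruct (classic (forall s s', aY g < s -> s < s' -> s' < bY g -> phi g s < phi g s')) as [H|H]; [left; auto|right].
  apply not_all_ex_not in H. destruct H as [s1 H]. apply not_all_ex_not in H. destruct H as [s2 H].
  assert (Hs : aY g < s1 /\ s1 < s2 /\ s2 < bY g /\ ~ phi g s1 < phi g s2) by tauto. clear H.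
  destruct Hs as [H1 [H12 [H2 N12]]].
  assert (L12 : phi g s2 < phi g s1).
  { destruct (Rtotal_order (phi g s2) (phi g s1)) as [E|[E|E]]; auto.
    - apply phi_inj in E; lra.
    - lra. }
  intros s3 s4 H3 H34 H4. apply Rnot_le_lt. intro N34.
  assert (L34 : phi g s3 < phi g s4).
  { destruct N34 as [E|E]; auto. apply phi_inj in E; lra. }
  set (sg := fun t => s1 + t * (s3 - s1)). set (rh := fun t => s2 + t * (s4 - s2)).
  assert (Isg : forall t, 0 <= t <= 1 -> aY g < sg t < bY g) by (intros; apply path_in; lra).
  assert (Irh : forall t, 0 <= t <= 1 -> aY g < rh t < bY g) by (intros; apply path_in; lra).
  assert (Lt : forall t, 0 <= t <= 1 -> sg t < rh t).
  { intros t Ht. unfold sg, rh. replace (s1 + t * (s3 - s1)) with ((1-t)*s1 + t*s3) by ring.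
    replace (s2 + t * (s4 - s2)) with ((1-t)*s2 + t*s4) by ring.
    destruct (Rlt_dec t 1). assert (0 < (1 - t) * (s2 - s1)) by (apply Rmult_lt_0_compat; lra). nra. nra. }
  set (D := fun t => phi g (rh t) - phi g (sg t)).
  destruct (myIVT D 0 1 0) as [t [Ht Et]].
  - lra.
  - intros t Ht e He.
    destruct (phi_cont g (rh t) (Irh t Ht) (e/2) ltac:(lra)) as [d1 [Hd1 Hd1']].
    destruct (phi_cont g (sg t) (Isg t Ht) (e/2) ltac:(lra)) as [d2 [Hd2 Hd2']].
    set (K := Rabs (s4 - s2) + Rabs (s3 - s1) + 1).
    assert (HK : 1 <= K) by (unfold K; pose proof (Rabs_pos (s4 - s2)); pose proof (Rabs_pos (s3 - s1)); lra).
    exists (Rmin d1 d2 / K). split. { apply Rdiv_lt_0_compat. apply Rmin_pos; auto. lra. }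
    intros t' Ht' Htt.
    assert (Hm : Rabs (t' - t) * K < Rmin d1 d2).
    { apply (Rmult_lt_compat_r K) in Htt; [|lra]. unfold Rdiv in Htt. rewrite Rmult_assoc, Rinv_l in Htt by lra. lra. }
    assert (Hr : Rabs (rh t' - rh t) < d1).
    { unfold rh. replace (s2 + t' * (s4 - s2) - (s2 + t * (s4 - s2))) with ((t' - t) * (s4 - s2)) by ring.
      rewrite Rabs_mult. pose proof (Rmin_l d1 d2). pose proof (Rabs_pos (t' - t)). pose proof (Rabs_pos (s4 - s2)). pose proof (Rabs_pos (s3 - s1)). pose proof (Rabs_pos (s4 - s2)).
      assert (Rabs (t' - t) * Rabs (s4 - s2) <= Rabs (t' - t) * K) by (apply Rmult_le_compat_l; unfold K; lra). lra. }
    assert (Hs : Rabs (sg t' - sg t) < d2).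
    { unfold sg. replace (s1 + t' * (s3 - s1) - (s1 + t * (s3 - s1))) with ((t' - t) * (s3 - s1)) by ring.
      rewrite Rabs_mult. pose proof (Rmin_r d1 d2). pose proof (Rabs_pos (t' - t)). pose proof (Rabs_pos (s3 - s1)). pose proof (Rabs_pos (s4 - s2)).
      assert (Rabs (t' - t) * Rabs (s3 - s1) <= Rabs (t' - t) * K) by (apply Rmult_le_compat_l; unfold K; lra). lra. }
    specialize (Hd1' _ (Irh t' Ht') Hr). specialize (Hd2' _ (Isg t' Ht') Hs).
    unfold D. apply Rabs_def2 in Hd1'. apply Rabs_def2 in Hd2'. apply Rabs_def1; lra.
  - unfold D, sg, rh. replace (s2 + 0 * (s4 - s2)) with s2 by ring. replace (s1 + 0 * (s3 - s1)) with s1 by ring.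
    replace (s2 + 1 * (s4 - s2)) with s4 by ring. replace (s1 + 1 * (s3 - s1)) with s3 by ring. lra.
  - unfold D in Et. assert (E : phi g (rh t) = phi g (sg t)) by lra.
    apply phi_inj in E; try (apply Irh; auto); try (apply Isg; auto). specialize (Lt t Ht). lra.
Qed.

Definition inc g : bool := if excluded_middle_informative
   (forall s s', aY g < s -> s < s' -> s' < bY g -> phi g s < phi g s') then true else false.

Lemma inc_true g : inc g = true -> forall s s', aY g < s -> s < s' -> s' < bY g -> phi g s < phi g s'.
Proof. unfold inc. destruct excluded_middle_informative; auto. discriminate. Qed.
Lemma inc_false g : inc g = false -> forall s s', aY g < s -> s < s' -> s' < bY g -> phi g s' < phi g s.
Proof. unfold inc. destruct excluded_middle_informative as [H|H]. discriminate.
  intros _. destruct (phi_mono g) as [H'|H']; auto. contradiction. Qed.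

Definition aff g s := if inc g then (bX g - aX g) / (bY g - aY g) * (s - aY g) + aX g
                      else (aX g - bX g) / (bY g - aY g) * (s - aY g) + bX g.

Definition phinv g x := epsilon (inhabits 0) (fun s => aY g < s < bY g /\ phi g s = x).
Definition fg g x := aff g (phinv g x).

Lemma phinv_spec g x : aX g < x < bX g -> aY g < phinv g x < bY g /\ phi g (phinv g x) = x.
Proof. intros Hx. unfold phinv. apply (epsilon_spec (inhabits 0) (fun s => aY g < s < bY g /\ phi g s = x)).
  apply phi_surj; auto. Qed.

Lemma phinv_phi g s : aY g < s < bY g -> phinv g (phi g s) = s.
Proof. intros Hs. destruct (phi_spec g s Hs) as [H1 _]. destruct (phinv_spec g (phi g s) H1) as [A B].
  apply (phi_inj g); auto. Qed.

Lemma XY_pos g : aX g < bX g /\ aY g < bY g.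
Proof. split. apply (proj1 (X_spec g)). apply (proj1 (Y_spec g)). Qed.

Lemma aff_range g s : aY g < s < bY g -> aX g < aff g s < bX g.
Proof. intros Hs. destruct (XY_pos g) as [H1 H2]. unfold aff.
  assert (0 < (s - aY g) / (bY g - aY g) < 1).
  { split. apply Rdiv_lt_0_compat; lra. apply (Rmult_lt_reg_r (bY g - aY g)). lra.
    unfold Rdiv. rewrite Rmult_assoc, Rinv_l by lra. lra. }
  destruct (inc g).
  - replace ((bX g - aX g) / (bY g - aY g) * (s - aY g) + aX g) with
      ((bX g - aX g) * ((s - aY g) / (bY g - aY g)) + aX g) by (field; lra). nra.
  - replace ((aX g - bX g) / (bY g - aY g) * (s - aY g) + bX g) with
      (bX g - (bX g - aX g) * ((s - aY g) / (bY g - aY g))) by (field; lra). nra.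
Qed.

Lemma aff_onto g y : aX g < y < bX g -> exists s, aY g < s < bY g /\ aff g s = y.
Proof. intros Hy. destruct (XY_pos g) as [H1 H2]. unfold aff. destruct (inc g).
  - exists (aY g + (y - aX g) * ((bY g - aY g) / (bX g - aX g))).
    assert (0 < (y - aX g) / (bX g - aX g) < 1).
    { split. apply Rdiv_lt_0_compat; lra. apply (Rmult_lt_reg_r (bX g - aX g)). lra.
      unfold Rdiv. rewrite Rmult_assoc, Rinv_l by lra. lra. }
    split. replace (aY g + (y - aX g) * ((bY g - aY g) / (bX g - aX g))) with
      (aY g + (bY g - aY g) * ((y - aX g) / (bX g - aX g))) by (field; lra). nra.
    field; lra.
  - exists (aY g + (bX g - y) * ((bY g - aY g) / (bX g - aX g))).
    assert (0 < (bX g - y) / (bX g - aX g) < 1).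
    { split. apply Rdiv_lt_0_compat; lra. apply (Rmult_lt_reg_r (bX g - aX g)). lra.
      unfold Rdiv. rewrite Rmult_assoc, Rinv_l by lra. lra. }
    split. replace (aY g + (bX g - y) * ((bY g - aY g) / (bX g - aX g))) with
      (aY g + (bY g - aY g) * ((bX g - y) / (bX g - aX g))) by (field; lra). nra.
    field; lra.
Qed.

Lemma aff_mono_inc g s s' : inc g = true -> s < s' -> aff g s < aff g s'.
Proof. intros E H. destruct (XY_pos g). unfold aff. rewrite E.
  assert (0 < (bX g - aX g) / (bY g - aY g)) by (apply Rdiv_lt_0_compat; lra). nra. Qed.
Lemma aff_mono_dec g s s' : inc g = false -> s < s' -> aff g s' < aff g s.
Proof. intros E H. destruct (XY_pos g). unfold aff. rewrite E.
  assert ((aX g - bX g) / (bY g - aY g) < 0).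
  { unfold Rdiv. apply Rmult_neg_pos. lra. apply Rinv_0_lt_compat. lra. } nra. Qed.

Lemma fg_into g x : aX g < x < bX g -> aX g < fg g x < bX g.
Proof. intros Hx. unfold fg. apply aff_range. apply phinv_spec; auto. Qed.

Lemma fg_mono g x x' : aX g < x -> x < x' -> x' < bX g -> fg g x < fg g x'.
Proof. intros H1 H2 H3. destruct (phinv_spec g x ltac:(lra)) as [A1 B1]. destruct (phinv_spec g x' ltac:(lra)) as [A2 B2].
  unfold fg. destruct (inc g) eqn:E.
  - apply aff_mono_inc; auto.
    destruct (Rtotal_order (phinv g x) (phinv g x')) as [LL|[LL|LL]]; auto.
    + rewrite LL in B1. lra.
    + pose proof (inc_true g E _ _ (proj1 A2) LL (proj2 A1)). lra.
  - apply aff_mono_dec; auto.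
    destruct (Rtotal_order (phinv g x') (phinv g x)) as [LL|[LL|LL]]; auto.
    + rewrite LL in B2. lra.
    + pose proof (inc_false g E _ _ (proj1 A1) LL (proj2 A2)). lra.
Qed.

Lemma fg_onto g y : aX g < y < bX g -> exists x, aX g < x < bX g /\ fg g x = y.
Proof. intros Hy. destruct (aff_onto g y Hy) as [s [Hs E]]. exists (phi g s). split.
  apply phi_spec; auto. unfold fg. rewrite phinv_phi; auto. Qed.

Lemma fg_phi g s : aY g < s < bY g -> fg g (phi g s) = aff g s.
Proof. intros Hs. unfold fg. rewrite phinv_phi; auto. Qed.

Definition PX (l : L) (t : R) (g : G) : Prop := fst (X g) = l /\ tX g = t.

Lemma HXi g1 g2 : same_bi (X g1) (X g2) -> g1 = g2.
Proof. apply Hfam. Qed.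
Lemma HXY g1 g2 : ~ same_bi (X g1) (Y g2).
Proof. apply Hfam. Qed.

Lemma PX_disj l t g1 g2 x : PX l t g1 -> PX l t g2 -> aX g1 < x < bX g1 -> aX g2 < x < bX g2 -> g1 = g2.
Proof. intros [E1 T1] [E2 T2] H1 H2. apply HXi. split. congruence.
  assert (B1 := fam_X g1). assert (B2 := fam_X g2). rewrite E1 in B1. rewrite E2 in B2.
  apply (bi_meet (S l) (u l) (v l) (snd (X g1)) (snd (X g2)) (x,t)); auto.
  - apply X_spec. simpl. auto.
  - apply X_spec. simpl. auto.
Qed.

Definition Hpatch (l : L) (t : R) : R -> R := patch G (PX l t) aX bX fg.

Lemma Hpatch_in l t g x : PX l t g -> aX g < x < bX g -> Hpatch l t x = fg g x.
Proof. intros. unfold Hpatch. apply (patch_in G (PX l t) aX bX fg); auto.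
  intros; eapply PX_disj; eauto. Qed.

Lemma Hpatch_mono l t x y : x < y -> Hpatch l t x < Hpatch l t y.
Proof. apply patch_mono. intros; eapply PX_disj; eauto. intros; apply fg_mono; tauto.
  intros; apply fg_into; auto. Qed.

Lemma Hpatch_surj l t y : exists x, Hpatch l t x = y.
Proof. destruct (patch_surj G (PX l t) aX bX fg) with (y := y) as [x [E _]].
  intros; eapply PX_disj; eauto. intros; apply fg_onto; auto. exists x; auto. Qed.

Lemma Hpatch_pres l t : (forall x, S l (x,t) -> S l (Hpatch l t x, t)) /\
  (forall y, S l (y,t) -> exists x, S l (x,t) /\ Hpatch l t x = y).
Proof. apply (patch_pres G (PX l t) aX bX fg).
  intros; eapply PX_disj; eauto. intros; apply fg_into; auto. intros; apply fg_onto; auto.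
  intros g x [E T] Hx. assert (B := fam_X g). rewrite E in B.
  apply (bi_sub' (S l) (u l) (v l) (snd (X g))); auto. apply X_spec. simpl. auto.
Qed.

Definition PhiG (l : L) := interp (u l) (v l) (Hpatch l (u l)) (Hpatch l (v l)).

Lemma PhiG_good l : Good (S l) (u l) (v l) (PhiG l).
Proof. apply interp_good. apply (Hmod l). apply Hpatch_mono. apply Hpatch_surj. apply Hpatch_mono. apply Hpatch_surj. Qed.

Lemma uv_lt l : u l < v l.
Proof. apply (Hmod l). Qed.

Lemma PhiG_img l : Img (S l) (PhiG l) = S l.
Proof. apply interp_img. apply PhiG_good. apply Hpatch_pres. apply Hpatch_pres. apply Hpatch_pres. apply Hpatch_pres. Qed.

Lemma PhiG_level l t x : t = u l \/ t = v l -> PhiG l x t = Hpatch l t x.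
Proof. intros [->| ->]; unfold PhiG. apply interp_u, uv_lt. apply interp_v, uv_lt. Qed.

Lemma Hpatch_Y g s : aY g < s < bY g -> Hpatch (fst (Y g)) (tY g) s = s.
Proof. intros Hs. unfold Hpatch. apply patch_out. intros [g' [[E T] H']].
  apply (HXY g' g). split; auto.
  assert (B1 := fam_X g'). assert (B2 := fam_Y g). rewrite E in B1.
  apply (bi_meet (S (fst (Y g))) (u (fst (Y g))) (v (fst (Y g))) (snd (X g')) (snd (Y g)) (s, tY g)); auto.
  - apply X_spec. simpl. auto.
  - apply Y_spec. simpl. auto.
Qed.

Lemma tX_lev g : tX g = u (fst (X g)) \/ tX g = v (fst (X g)).
Proof. apply X_spec. Qed.
Lemma tY_lev g : tY g = u (fst (Y g)) \/ tY g = v (fst (Y g)).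
Proof. apply Y_spec. Qed.

Lemma PhiG_X g x : aX g < x < bX g -> PhiG (fst (X g)) x (tX g) = fg g x.
Proof. intros Hx. rewrite PhiG_level by apply tX_lev. apply Hpatch_in; auto. split; auto. Qed.

Lemma PhiG_Y g s : aY g < s < bY g -> PhiG (fst (Y g)) s (tY g) = s.
Proof. intros Hs. rewrite PhiG_level by apply tY_lev. apply Hpatch_Y; auto. Qed.

Lemma SX g x : aX g < x < bX g -> S (fst (X g)) (x, tX g).
Proof. intros. apply (bi_sub' _ _ _ _ _ (fam_X g)). apply X_spec. simpl. auto. Qed.
Lemma SY g s : aY g < s < bY g -> S (fst (Y g)) (s, tY g).
Proof. intros. apply (bi_sub' _ _ _ _ _ (fam_Y g)). apply Y_spec. simpl. auto. Qed.

Lemma ImgJ_X g p : ImgJ (PhiG (fst (X g))) (snd (X g)) p <-> (aX g < fst p < bX g /\ snd p = tX g).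
Proof. destruct p as [y t]. unfold ImgJ. simpl. split.
  - intros [x [Hx E]]. apply X_spec in Hx. simpl in Hx. destruct Hx as [Hx ->]. rewrite PhiG_X in E by auto.
    subst y. split; auto. apply fg_into; auto.
  - intros [Hy ->]. destruct (fg_onto g y Hy) as [x [Hx E]]. exists x. split.
    apply X_spec. simpl. auto. rewrite PhiG_X; auto.
Qed.

Lemma ImgJ_Y g p : ImgJ (PhiG (fst (Y g))) (snd (Y g)) p <-> (aY g < fst p < bY g /\ snd p = tY g).
Proof. destruct p as [y t]. unfold ImgJ. simpl. split.
  - intros [x [Hx E]]. apply Y_spec in Hx. simpl in Hx. destruct Hx as [Hx ->]. rewrite PhiG_Y in E by auto.
    subst y. split; auto.
  - intros [Hy ->]. exists y. split. apply Y_spec. simpl. auto. rewrite PhiG_Y; auto.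
Qed.

Lemma glue_eq g s : aY g < s < bY g ->
  q (gP S PhiG (fst (X g), (aff g s, tX g))) = q (gP S PhiG (fst (Y g), (s, tY g))).
Proof. intros Hs. unfold gP, lmap, fmap. simpl.
  destruct (phi_spec g s Hs) as [P1 P2].
  assert (E1 : Inv (S (fst (X g))) (PhiG (fst (X g))) (aff g s) (tX g) = phi g s).
  { rewrite <- (fg_phi g s Hs). rewrite <- PhiG_X by auto.
    apply (Inv_F _ _ _ _ _ _ (PhiG_good (fst (X g)))). apply SX; auto. }
  assert (E2 : Inv (S (fst (Y g))) (PhiG (fst (Y g))) s (tY g) = s).
  { pattern s at 1. rewrite <- (PhiG_Y g s Hs).
    apply (Inv_F _ _ _ _ _ _ (PhiG_good (fst (Y g)))). apply SY; auto. }
  rewrite E1, E2. auto.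
Qed.

Lemma S'_eq : S' S PhiG = S.
Proof. apply functional_extensionality. intro l. unfold S'. apply PhiG_img. Qed.

Lemma part2_core : (forall l, Good (S l) (u l) (v l) (PhiG l)) /\ (forall l, Img (S l) (PhiG l) = S l) /\
  affine_atlas opnZ S u v (fun x => q (gP S PhiG x)).
Proof. split; [apply PhiG_good|]. split; [apply PhiG_img|]. split; [auto|].
  exists G, (fun g => imgB PhiG (X g)), (fun g => imgB PhiG (Y g)). split.
  - rewrite <- S'_eq at 1. apply transport; auto. apply PhiG_good.
  - intros g. exists (aX g), (bX g), (aY g), (bY g), (tX g), (tY g).
    split. apply (proj1 (X_spec g)). split. apply (proj1 (Y_spec g)). split. apply ImgJ_X. split. apply ImgJ_Y.
    unfold imgB. simpl. destruct (inc g) eqn:E.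
    + left. intros s Hs. pose proof (glue_eq g s Hs) as H. unfold aff in H. rewrite E in H. exact H.
    + right. intros s Hs. pose proof (glue_eq g s Hs) as H. unfold aff in H. rewrite E in H. exact H.
Qed.
End Glue.

Section C1.
Variable B : R -> Prop.
Hypothesis HBo : openR B.
Hypothesis HB2 : forall z, 2 <= Rabs z -> ~ B z.

Definition lend (x : R) : R := epsilon (inhabits 0) (fun m => is_lub (fun c => c <= x /\ ~ B c) m).

Lemma notB_low z : z <= -2 -> ~ B z.
Proof. intros. apply HB2. unfold Rabs; destruct Rcase_abs; lra. Qed.
Lemma notB_high z : 2 <= z -> ~ B z.
Proof. intros. apply HB2. unfold Rabs; destruct Rcase_abs; lra. Qed.

Lemma lend_spec x : is_lub (fun c => c <= x /\ ~ B c) (lend x).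
Proof. unfold lend. apply (epsilon_spec (inhabits 0) (fun m => is_lub (fun c => c <= x /\ ~ B c) m)).
  destruct (completeness (fun c => c <= x /\ ~ B c)) as [m Hm].
  - exists x. intros c [Hc _]. auto.
  - exists (Rmin x (-2)). split. apply Rmin_l. apply notB_low. apply Rmin_r.
  - exists m; auto.
Qed.

Lemma lend_le x : lend x <= x.
Proof. apply (proj2 (lend_spec x)). intros c [Hc _]. auto. Qed.

Lemma lend_ge c x : c <= x -> ~ B c -> c <= lend x.
Proof. intros. apply (proj1 (lend_spec x)). auto. Qed.

Lemma lend_ge2 x : Rmin x (-2) <= lend x.
Proof. apply lend_ge. apply Rmin_l. apply notB_low. apply Rmin_r. Qed.

Lemma lend_notB x : ~ B (lend x).
Proof. intro Hb. destruct (HBo _ Hb) as [r [Hr Hr']].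
  destruct (lub_approx _ _ r (lend_spec x) Hr) as [c [[Hc1 Hc2] Hc3]].
  assert (c <= lend x) by (apply (proj1 (lend_spec x)); auto).
  apply Hc2. apply Hr'. apply Rabs_def1; lra.
Qed.

Lemma lend_between x z : lend x < z <= x -> B z.
Proof. intros [H1 H2]. apply NNPP. intro N. assert (z <= lend x) by (apply lend_ge; auto). lra. Qed.

Lemma lend_lt x : B x -> lend x < x.
Proof. intros Hx. destruct (lend_le x) as [H|H]; auto. exfalso. apply (lend_notB x). rewrite H. auto. Qed.

Lemma lend_char x l : l < x -> ~ B l -> (forall w, l < w <= x -> B w) -> lend x = l.
Proof. intros H1 H2 H3. apply Rle_antisym.
  - apply (proj2 (lend_spec x)). intros c [Hc1 Hc2]. destruct (Rle_dec c l); auto. exfalso. apply Hc2. apply H3. lra.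
  - apply lend_ge; auto. lra.
Qed.

Lemma lend_out x : ~ B x -> lend x = x.
Proof. intros N. apply Rle_antisym. apply lend_le. apply lend_ge; auto. lra. Qed.
End C1.

Definition rend (B : R -> Prop) (x : R) : R := - lend (fun z => B (- z)) (- x).

Section C2.
Variable B : R -> Prop.
Hypothesis HBo : openR B.
Hypothesis HB2 : forall z, 2 <= Rabs z -> ~ B z.

Let B' := fun z => B (- z).
Lemma HBo' : openR B'.
Proof. intros x Hx. destruct (HBo _ Hx) as [r [Hr Hr']]. exists r. split; auto. intros x' Hx'. apply Hr'.
  replace (- x' - - x) with (- (x' - x)) by ring. rewrite Rabs_Ropp. auto. Qed.
Lemma HB2' : forall z, 2 <= Rabs z -> ~ B' z.
Proof. intros z Hz. apply HB2. rewrite Rabs_Ropp. auto. Qed.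

Lemma rend_ge x : x <= rend B x.
Proof. unfold rend; fold B'. pose proof (lend_le B' HB2' (- x)). fold B'. lra. Qed.
Lemma rend_notB x : ~ B (rend B x).
Proof. unfold rend; fold B'. pose proof (lend_notB B' HBo' HB2' (- x)). unfold B' in H. auto. Qed.
Lemma rend_between x z : x <= z < rend B x -> B z.
Proof. unfold rend; fold B'. intros Hz. pose proof (lend_between B' HB2' (- x) (- z)) as H.
  assert (H0 : B' (- z)) by (apply H; lra). unfold B' in H0. rewrite Ropp_involutive in H0. auto. Qed.
Lemma rend_gt x : B x -> x < rend B x.
Proof. intros Hx. unfold rend; fold B'. pose proof (lend_lt B' HBo' HB2' (- x)) as H.
  assert (H0 : lend B' (- x) < - x) by (apply H; unfold B'; rewrite Ropp_involutive; auto). lra. Qed.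
Lemma rend_char x r : x < r -> ~ B r -> (forall w, x <= w < r -> B w) -> rend B x = r.
Proof. intros H1 H2 H3. unfold rend; fold B'. rewrite (lend_char B' HB2' (- x) (- r)). ring. lra.
  unfold B'. rewrite Ropp_involutive. auto.
  intros w Hw. unfold B'. apply H3. lra. Qed.
Lemma rend_out x : ~ B x -> rend B x = x.
Proof. intros N. unfold rend; fold B'. rewrite (lend_out B' HB2'). ring.  unfold B'. rewrite Ropp_involutive. auto. Qed.
Lemma rend_le2 x : rend B x <= Rmax x 2.
Proof. unfold rend; fold B'. pose proof (lend_ge2 B' HB2' (- x)). unfold Rmin, Rmax in *.
  repeat destruct Rle_dec; lra. Qed.

Lemma comp_in x z : B x -> lend B x < z < rend B x -> B z.
Proof. intros Hx Hz. destruct (Rle_dec z x). apply (lend_between B HB2 x z). lra.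
  apply (rend_between x z). lra. Qed.

Lemma comp_const x z : B x -> lend B x < z < rend B x -> lend B z = lend B x /\ rend B z = rend B x.
Proof. intros Hx Hz. split.
  - apply lend_char; auto. lra. apply lend_notB; auto. intros w Hw. apply (comp_in x w); auto. lra.
  - apply rend_char; auto. lra. apply rend_notB. intros w Hw. apply (comp_in x w); auto. lra.
Qed.

Lemma comp_order x y : B x -> B y -> x < y -> (lend B y = lend B x /\ rend B y = rend B x) \/ rend B x <= lend B y.
Proof. intros Hx Hy Hxy. destruct (Rlt_dec y (rend B x)).
  - left. apply comp_const; auto. pose proof (lend_le B HB2 x). lra.
  - right. apply lend_ge; auto. lra. apply rend_notB.
Qed.

Lemma comp_bounds x : B x -> -2 <= lend B x /\ rend B x <= 2.
Proof. intros Hx. assert (Rabs x < 2) by (destruct (Rlt_dec (Rabs x) 2); auto; exfalso; apply (HB2 x); auto; lra).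
  apply Rabs_def2 in H. pose proof (lend_ge2 B HB2 x). pose proof rend_le2 x.
  unfold Rmin, Rmax in *. repeat destruct Rle_dec; lra. Qed.
End C2.

Lemma mm_mono p q r p' q' r' : p < p' -> q < q' -> r < r' -> Rmax (Rmin p q) r < Rmax (Rmin p' q') r'.
Proof. intros. unfold Rmax, Rmin. repeat destruct Rle_dec; lra. Qed.

Lemma mm_lip p q r p' q' r' : Rabs (Rmax (Rmin p q) r - Rmax (Rmin p' q') r') <= Rabs (p - p') + Rabs (q - q') + Rabs (r - r').
Proof. unfold Rmax, Rmin. pose proof (Rabs_pos (p - p')). pose proof (Rabs_pos (q - q')). pose proof (Rabs_pos (r - r')).
  repeat destruct Rle_dec; unfold Rabs in *; repeat destruct Rcase_abs; lra. Qed.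

Section SB.
Variable B : R -> Prop.
Hypothesis HBo : openR B.
Hypothesis HB2 : forall z, 2 <= Rabs z -> ~ B z.

Definition ea x := lend B x.
Definition eb x := rend B x.
Definition sh x := (ea x + eb x + x) / 3.
Definition FK (K x : R) : R :=
  if excluded_middle_informative (B x) then Rmax (Rmin (sh x) (ea x + K * (x - ea x))) (eb x - K * (eb x - x)) else x.
Definition F0 (x : R) : R := if excluded_middle_informative (B x) then sh x else x.

Lemma ea_lt x : B x -> ea x < x.
Proof. apply lend_lt; auto. Qed.
Lemma eb_gt x : B x -> x < eb x.
Proof. apply rend_gt; auto. Qed.

Lemma FK_in K x : B x -> FK K x = Rmax (Rmin (sh x) (ea x + K * (x - ea x))) (eb x - K * (eb x - x)).
Proof. intros Hx. unfold FK. destruct excluded_middle_informative; tauto. Qed.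
Lemma FK_out K x : ~ B x -> FK K x = x.
Proof. intros Hx. unfold FK. destruct excluded_middle_informative; tauto. Qed.
Lemma F0_in x : B x -> F0 x = sh x.
Proof. intros Hx. unfold F0. destruct excluded_middle_informative; tauto. Qed.

Lemma sh_range x : B x -> ea x + (eb x - ea x)/3 < sh x < eb x - (eb x - ea x)/3.
Proof. intros Hx. pose proof (ea_lt x Hx). pose proof (eb_gt x Hx). unfold sh. split; lra. Qed.

Lemma FK_range K x : 1 <= K -> B x -> ea x < FK K x < eb x.
Proof. intros HK Hx. rewrite FK_in by auto. pose proof (ea_lt x Hx). pose proof (eb_gt x Hx).
  pose proof (sh_range x Hx).
  assert (0 < K * (x - ea x)) by (apply Rmult_lt_0_compat; lra).
  assert (0 < K * (eb x - x)) by (apply Rmult_lt_0_compat; lra).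
  unfold Rmax, Rmin. repeat destruct Rle_dec; lra. Qed.

Lemma same_comp x y : B x -> ea x < y < eb x -> ea y = ea x /\ eb y = eb x.
Proof. apply comp_const; auto. Qed.

Lemma diff_comp x y : B x -> B y -> x < y -> (ea y = ea x /\ eb y = eb x) \/ eb x <= ea y.
Proof. apply comp_order; auto. Qed.

Lemma notB_side x y : B x -> ~ B y -> y <= ea x \/ eb x <= y.
Proof. intros Hx Hy. destruct (Rle_dec y (ea x)); auto. destruct (Rle_dec (eb x) y); auto.
  exfalso. apply Hy. apply (comp_in B HB2 x y); auto. unfold ea, eb in *. lra. Qed.

Lemma FK_mono K x y : 1 <= K -> x < y -> FK K x < FK K y.
Proof. intros HK Hxy.
  destruct (classic (B x)) as [Bx|Bx]; destruct (classic (B y)) as [By|By].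
  - destruct (diff_comp x y Bx By Hxy) as [[E1 E2]|E].
    + rewrite !FK_in by auto. unfold sh. rewrite E1, E2. apply mm_mono; nra.
    + pose proof (FK_range K x HK Bx). pose proof (FK_range K y HK By). lra.
  - rewrite (FK_out K y By). pose proof (FK_range K x HK Bx). destruct (notB_side x y Bx By).
    + pose proof (ea_lt x Bx). lra.
    + lra.
  - rewrite (FK_out K x Bx). pose proof (FK_range K y HK By). destruct (notB_side y x By Bx).
    + lra.
    + pose proof (eb_gt y By). lra.
  - rewrite !FK_out by auto. auto.
Qed.

Lemma F0_mono x y : B x -> B y -> x < y -> F0 x < F0 y.
Proof. intros Bx By Hxy. rewrite !F0_in by auto.
  destruct (diff_comp x y Bx By Hxy) as [[E1 E2]|E].
  - unfold sh. rewrite E1, E2. lra.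
  - pose proof (sh_range x Bx). pose proof (sh_range y By). pose proof (ea_lt x Bx). pose proof (eb_gt y By). lra.
Qed.

Lemma FK_sh K x : B x -> (eb x - ea x) <= K * Rmin (x - ea x) (eb x - x) -> FK K x = sh x.
Proof. intros Hx HK. rewrite FK_in by auto. pose proof (sh_range x Hx).
  pose proof (Rmin_l (x - ea x) (eb x - x)). pose proof (Rmin_r (x - ea x) (eb x - x)).
  pose proof (ea_lt x Hx). pose proof (eb_gt x Hx).
  assert (0 <= K). { destruct (Rle_dec 0 K); auto. exfalso.
    assert (0 < Rmin (x - ea x) (eb x - x)) by (apply Rmin_pos; lra). nra. }
  assert (K * Rmin (x - ea x) (eb x - x) <= K * (x - ea x)) by (apply Rmult_le_compat_l; lra).
  assert (K * Rmin (x - ea x) (eb x - x) <= K * (eb x - x)) by (apply Rmult_le_compat_l; lra).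
  unfold Rmax, Rmin. repeat destruct Rle_dec; lra. Qed.

Lemma FK_1 x : FK 1 x = x.
Proof. destruct (classic (B x)) as [Bx|Bx].
  - rewrite FK_in by auto. pose proof (sh_range x Bx). pose proof (ea_lt x Bx). pose proof (eb_gt x Bx).
    unfold Rmax, Rmin. repeat destruct Rle_dec; lra.
  - apply FK_out; auto.
Qed.

Lemma FK_big K x : 2 <= Rabs x -> FK K x = x.
Proof. intros. apply FK_out. apply HB2. auto. Qed.

Lemma FK_near_out K x c : 1 <= K -> ~ B c -> Rabs (FK K x - c) <= K * Rabs (x - c).
Proof. intros HK Hc. destruct (classic (B x)) as [Bx|Bx].
  - pose proof (FK_range K x HK Bx). pose proof (ea_lt x Bx). pose proof (eb_gt x Bx).
    destruct (notB_side x c Bx Hc) as [Hc'|Hc'].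
    + assert (FK K x <= ea x + K * (x - ea x)).
      { rewrite FK_in by auto. assert (eb x - K * (eb x - x) <= ea x + K * (x - ea x)) by nra.
        unfold Rmax, Rmin. repeat destruct Rle_dec; lra. }
      assert (ea x + K * (x - ea x) <= c + K * (x - c)) by nra.
      rewrite Rabs_right by lra. rewrite Rabs_right by lra. lra.
    + assert (eb x - K * (eb x - x) <= FK K x).
      { rewrite FK_in by auto. apply Rmax_r. }
      assert (c - K * (c - x) <= eb x - K * (eb x - x)) by nra.
      rewrite Rabs_left by lra. rewrite Rabs_left by lra. lra.
  - rewrite FK_out by auto. pose proof (Rabs_pos (x - c)). nra.
Qed.

Lemma ea_bounds x : B x -> -2 <= ea x /\ eb x <= 2.
Proof. apply comp_bounds; auto. Qed.

Lemma B_lt2 x : B x -> -2 < x < 2.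
Proof. intros Hx. assert (Rabs x < 2) by (destruct (Rlt_dec (Rabs x) 2); auto; exfalso; apply (HB2 x); auto; lra).
  apply Rabs_def2 in H. lra. Qed.

Lemma FK_cont K0 x0 : 1 <= K0 -> forall e, 0 < e -> exists d, 0 < d /\ forall K x, 1 <= K ->
  Rabs (K - K0) < d -> Rabs (x - x0) < d -> Rabs (FK K x - FK K0 x0) < e.
Proof. intros HK0 e He. destruct (classic (B x0)) as [Bx0|Bx0].
  - pose proof (ea_lt x0 Bx0). pose proof (eb_gt x0 Bx0). pose proof (ea_bounds x0 Bx0). pose proof (B_lt2 x0 Bx0).
    set (d0 := Rmin (x0 - ea x0) (eb x0 - x0)).
    assert (Hd0 : 0 < d0) by (apply Rmin_pos; lra).
    pose proof (Rmin_l (x0 - ea x0) (eb x0 - x0)). pose proof (Rmin_r (x0 - ea x0) (eb x0 - x0)).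
    exists (Rmin (Rmin d0 1) (e / (2 * K0 + 11))). split.
    { repeat apply Rmin_pos; try lra. apply Rdiv_lt_0_compat; lra. }
    intros K x HK G1 G2.
    pose proof (Rmin_l (Rmin d0 1) (e / (2 * K0 + 11))). pose proof (Rmin_r (Rmin d0 1) (e / (2 * K0 + 11))).
    pose proof (Rmin_l d0 1). pose proof (Rmin_r d0 1).
    set (dd := Rmin (Rmin d0 1) (e / (2 * K0 + 11))) in *.
    apply Rabs_def2 in G1. apply Rabs_def2 in G2.
    assert (Hx : ea x0 < x < eb x0) by (unfold d0 in *; lra).
    destruct (same_comp x0 x Bx0 Hx) as [E1 E2].
    assert (Bx : B x) by (apply (comp_in B HB2 x0 x); auto).
    rewrite !FK_in by auto. unfold sh. rewrite E1, E2.
    eapply Rle_lt_trans. apply mm_lip.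
    replace ((ea x0 + eb x0 + x) / 3 - (ea x0 + eb x0 + x0) / 3) with ((x - x0)/3) by field.
    replace (ea x0 + K * (x - ea x0) - (ea x0 + K0 * (x0 - ea x0))) with (K * (x - x0) + (K - K0) * (x0 - ea x0)) by ring.
    replace (eb x0 - K * (eb x0 - x) - (eb x0 - K0 * (eb x0 - x0))) with (K * (x - x0) - (K - K0) * (eb x0 - x0)) by ring.
    assert (E3 : e / (2 * K0 + 11) * (2 * K0 + 11) = e) by (field; lra).
    assert (A1 : Rabs ((x - x0)/3) <= dd / 3).
    { unfold Rdiv. rewrite Rabs_mult. rewrite (Rabs_right (/3)) by lra. apply Rmult_le_compat_r. lra.
      apply Rabs_le. lra. }
    assert (A2 : Rabs (K * (x - x0) + (K - K0) * (x0 - ea x0)) <= (K0 + 1) * dd + dd * 4).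
    { eapply Rle_trans. apply Rabs_triang. rewrite !Rabs_mult. rewrite (Rabs_right K) by lra.
      rewrite (Rabs_right (x0 - ea x0)) by lra.
      assert (Rabs (x - x0) <= dd) by (apply Rabs_le; lra). assert (Rabs (K - K0) <= dd) by (apply Rabs_le; lra).
      pose proof (Rabs_pos (x - x0)). pose proof (Rabs_pos (K - K0)).
      assert (K * Rabs (x - x0) <= (K0 + 1) * dd) by (apply Rmult_le_compat; lra).
      assert (Rabs (K - K0) * (x0 - ea x0) <= dd * 4) by (apply Rmult_le_compat; lra). lra. }
    assert (A3 : Rabs (K * (x - x0) - (K - K0) * (eb x0 - x0)) <= (K0 + 1) * dd + dd * 4).
    { unfold Rminus at 1. eapply Rle_trans. apply Rabs_triang. rewrite Rabs_Ropp. rewrite !Rabs_mult. rewrite (Rabs_right K) by lra.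
      rewrite (Rabs_right (eb x0 - x0)) by lra.
      assert (Rabs (x - x0) <= dd) by (apply Rabs_le; lra). assert (Rabs (K - K0) <= dd) by (apply Rabs_le; lra).
      pose proof (Rabs_pos (x - x0)). pose proof (Rabs_pos (K - K0)).
      assert (K * Rabs (x - x0) <= (K0 + 1) * dd) by (apply Rmult_le_compat; lra).
      assert (Rabs (K - K0) * (eb x0 - x0) <= dd * 4) by (apply Rmult_le_compat; lra). lra. }
    assert (dd * (2 * K0 + 11) <= e).
    { rewrite <- E3. apply Rmult_le_compat_r; lra. }
    assert (0 < dd) by (unfold dd; repeat apply Rmin_pos; try lra; apply Rdiv_lt_0_compat; lra).
    nra.
  - rewrite (FK_out K0 x0 Bx0).
    exists (Rmin 1 (e / (K0 + 1))). split. { apply Rmin_pos. lra. apply Rdiv_lt_0_compat; lra. }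
    intros K x HK H1 H2. pose proof (Rmin_l 1 (e / (K0 + 1))). pose proof (Rmin_r 1 (e / (K0 + 1))).
    eapply Rle_lt_trans. apply (FK_near_out K x x0 HK Bx0).
    apply Rabs_def2 in H1. pose proof (Rabs_pos (x - x0)).
    assert (K * Rabs (x - x0) <= (K0 + 1) * Rabs (x - x0)) by (apply Rmult_le_compat_r; lra).
    assert ((K0 + 1) * Rabs (x - x0) < (K0 + 1) * (e / (K0 + 1))) by (apply Rmult_lt_compat_l; lra).
    replace ((K0 + 1) * (e / (K0 + 1))) with e in * by (field; lra). lra.
Qed.
End SB.

Definition Phi1 (B : R -> Prop) (t0 : R) (w : R -> R) (x t : R) : R :=
  if Req_EM_T t t0 then F0 B x else FK B (/ w t) x.

Section SB2.
Variables (S : R*R -> Prop) (u v t0 : R) (w : R -> R).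
Hypothesis Hs : is_strip S u v.
Hypothesis Ht0 : t0 = u \/ t0 = v.
Hypothesis Hb : forall x, S (x,t0) -> Rabs x < 2.
Hypothesis Hw1 : forall t, u <= t <= v -> t <> t0 -> 0 < w t <= 1.
Hypothesis Hwc : forall t, u <= t <= v -> forall e, 0 < e -> exists d, 0 < d /\
  forall t', u <= t' <= v -> Rabs (t' - t) < d -> Rabs (w t' - w t) < e.
Hypothesis Hw0 : w t0 = 0.

Let B := fun x => S (x,t0).
Lemma HBo1 : openR B.
Proof. apply (level_openR S u v t0 Hs). Qed.
Lemma HB21 : forall z, 2 <= Rabs z -> ~ B z.
Proof. intros z Hz Bz. specialize (Hb z Bz). lra. Qed.

Lemma invw_ge1 t : u <= t <= v -> t <> t0 -> 1 <= / w t.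
Proof. intros H1 H2. destruct (Hw1 t H1 H2). rewrite <- Rinv_1. apply Rinv_le_contravar; lra. Qed.

Lemma invw_cont t : u <= t <= v -> t <> t0 -> forall e, 0 < e -> exists d, 0 < d /\
  forall t', u <= t' <= v -> Rabs (t' - t) < d -> t' <> t0 -> Rabs (/ w t' - / w t) < e.
Proof. intros H1 H2 e He. destruct (Hw1 t H1 H2) as [W1 W2].
  destruct (Hwc t H1 (Rmin (w t / 2) (e * (w t * w t) / 2))) as [d [Hd Hd']].
  { apply Rmin_pos. lra. apply Rdiv_lt_0_compat; [|lra]. apply Rmult_lt_0_compat; nra. }
  exists d. split; auto. intros t' Ht' Htt Nt'.
  specialize (Hd' t' Ht' Htt). pose proof (Rmin_l (w t / 2) (e * (w t * w t) / 2)).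
  pose proof (Rmin_r (w t / 2) (e * (w t * w t) / 2)).
  apply Rabs_def2 in Hd'.
  assert (Hw' : w t / 2 < w t') by lra.
  replace (/ w t' - / w t) with ((w t - w t') / (w t' * w t)) by (field; lra).
  unfold Rdiv. rewrite Rabs_mult. rewrite Rabs_inv by (apply Rgt_not_eq; apply Rmult_lt_0_compat; lra).
  rewrite (Rabs_right (w t' * w t)) by (left; apply Rmult_lt_0_compat; lra).
  apply (Rmult_lt_reg_r (w t' * w t)). apply Rmult_lt_0_compat; lra.
  rewrite Rmult_assoc, Rinv_l by (apply Rgt_not_eq; apply Rmult_lt_0_compat; lra). rewrite Rmult_1_r.
  assert (Rabs (w t - w t') < e * (w t * w t) / 2) by (apply Rabs_def1; lra).
  assert (e * (w t * w t) / 2 < e * (w t' * w t)).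
  { assert (w t * w t / 2 < w t' * w t) by nra. nra. }
  lra.
Qed.

Lemma Phi1_good : Good S u v (Phi1 B t0 w).
Proof. pose proof Hs as [Huv [Hint [Hbd _]]].
  split; [auto|split; [|split]].
  - intros x t Hx e He. pose proof (strip_bounds S u v x t Hs Hx) as Ht.
    destruct (Req_dec t t0) as [Et|Nt].
    + subst t. assert (Bx : B x) by exact Hx.
      pose proof (ea_lt B HBo1 HB21 x Bx). pose proof (eb_gt B HBo1 HB21 x Bx).
      set (a := ea B x) in *. set (b := eb B x) in *.
      set (d0 := Rmin (x - a) (b - x)).
      assert (Hd0 : 0 < d0) by (apply Rmin_pos; lra).
      pose proof (Rmin_l (x - a) (b - x)). pose proof (Rmin_r (x - a) (b - x)).
      destruct (Hwc t0 ltac:(auto) (d0 / (2 * (b - a)))) as [dw [Hdw Hdw']].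
      { apply Rdiv_lt_0_compat; lra. }
      exists (Rmin (Rmin (d0/2) dw) (3 * e)). split. { repeat apply Rmin_pos; lra. }
      intros x' t' Hx' E1 E2.
      pose proof (Rmin_l (Rmin (d0/2) dw) (3 * e)). pose proof (Rmin_r (Rmin (d0/2) dw) (3 * e)).
      pose proof (Rmin_l (d0/2) dw). pose proof (Rmin_r (d0/2) dw).
      apply Rabs_def2 in E1.
      assert (Hx'c : a < x' < b) by (unfold d0 in *; lra).
      destruct (same_comp B HBo1 HB21 x x' Bx Hx'c) as [Ea Eb]. fold a b in Ea, Eb.
      assert (Bx' : B x') by (apply (comp_in B HB21 x x'); auto).
      assert (Hsh : Phi1 B t0 w x' t' = sh B x').
      { unfold Phi1. destruct (Req_EM_T t' t0) as [_|N]. apply F0_in; auto.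
        pose proof (strip_bounds S u v x' t' Hs Hx') as Ht'.
        specialize (Hdw' t' Ht' ltac:(lra)). rewrite Hw0 in Hdw'. rewrite Rminus_0_r in Hdw'.
        destruct (Hw1 t' Ht' N) as [W1 W2]. rewrite Rabs_right in Hdw' by lra.
        apply (FK_sh B HBo1 HB21); auto. rewrite Ea, Eb.
        assert (d0 / 2 <= Rmin (x' - a) (b - x')).
        { unfold Rmin at 1. destruct Rle_dec; unfold d0 in *; lra. }
        assert (HK : 2 * (b - a) / d0 < / w t').
        { apply (Rmult_lt_reg_r (w t')). auto. rewrite Rinv_l by lra.
          apply (Rmult_lt_reg_r (d0 / (2 * (b - a)))). apply Rdiv_lt_0_compat; lra.
          replace (2 * (b - a) / d0 * w t' * (d0 / (2 * (b - a)))) with (w t') by (field; lra). lra. }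
        assert (2 * (b - a) / d0 * (d0 / 2) = b - a) by (field; lra).
        assert (2 * (b - a) / d0 * (d0 / 2) <= / w t' * Rmin (x' - a) (b - x')).
        { apply Rmult_le_compat; try lra. apply Rlt_le, Rdiv_lt_0_compat; lra. }
        lra. }
      assert (Hsh0 : Phi1 B t0 w x t0 = sh B x).
      { unfold Phi1. destruct (Req_EM_T t0 t0) as [_|N]. apply F0_in; auto. lra. }
      rewrite Hsh, Hsh0. unfold sh. rewrite Ea, Eb. fold a b.
      replace ((a + b + x') / 3 - (a + b + x) / 3) with ((x' - x)/3) by field.
      apply Rabs_def1; lra.
    + assert (HK0 := invw_ge1 t Ht Nt).
      destruct (FK_cont B HBo1 HB21 (/ w t) x HK0 e He) as [d1 [Hd1 Hd1']].
      destruct (invw_cont t Ht Nt d1 Hd1) as [d2 [Hd2 Hd2']].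
      assert (Hd3 : 0 < Rabs (t - t0)) by (apply Rabs_pos_lt; lra).
      exists (Rmin (Rmin d1 d2) (Rabs (t - t0))). split. { repeat apply Rmin_pos; lra. }
      intros x' t' Hx' E1 E2.
      pose proof (Rmin_l (Rmin d1 d2) (Rabs (t - t0))). pose proof (Rmin_r (Rmin d1 d2) (Rabs (t - t0))).
      pose proof (Rmin_l d1 d2). pose proof (Rmin_r d1 d2).
      pose proof (strip_bounds S u v x' t' Hs Hx') as Ht'.
      assert (Nt' : t' <> t0).
      { intro E. subst t'. rewrite <- Rabs_Ropp in E2. replace (- (t0 - t)) with (t - t0) in E2 by ring. lra. }
      unfold Phi1. destruct (Req_EM_T t' t0) as [E|_]; [contradiction|].
      destruct (Req_EM_T t t0) as [E|_]; [contradiction|].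
      apply Hd1'. apply invw_ge1; auto. apply Hd2'; auto; lra. lra.
  - intros x y t Hx Hy Hxy. unfold Phi1. destruct (Req_EM_T t t0) as [E|N].
    + subst. apply F0_mono; auto. exact HBo1. exact HB21.
    + apply FK_mono; auto. exact HBo1. exact HB21. apply invw_ge1; auto. eapply strip_bounds; eauto.
  - intros t Ht y. unfold Phi1. destruct (Req_EM_T t t0) as [E|N].
    { exfalso. destruct Ht0; lra. }
    assert (HK := invw_ge1 t ltac:(lra) N).
    destruct (Rlt_dec (Rabs y) 2) as [Hy|Hy].
    + apply Rabs_def2 in Hy.
      destruct (myIVT (FK B (/ w t)) (-2) 2 y) as [z [_ Ez]].
      * lra.
      * intros x _ e He. destruct (FK_cont B HBo1 HB21 (/ w t) x HK e He) as [d [Hd Hd']].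
        exists d. split; auto. intros x' _ Hx'. apply Hd'; auto. apply Rabs_self; auto.
      * assert (FK B (/ w t) (-2) = -2) by (apply (FK_big B HB21); rewrite Rabs_left; lra).
        assert (FK B (/ w t) 2 = 2) by (apply (FK_big B HB21); rewrite Rabs_right; lra). lra.
      * exists z; auto.
    + exists y. apply (FK_big B HB21). lra.
Qed.

Lemma Phi1_img_t0 y : Img S (Phi1 B t0 w) (y, t0) <-> exists x, S (x,t0) /\ sh B x = y.
Proof. unfold Img, Phi1. simpl. destruct (Req_EM_T t0 t0) as [_|N]; [|lra]. split.
  - intros [x [Hx E]]. exists x. split; auto. rewrite <- E. symmetry. apply F0_in. exact Hx.
  - intros [x [Hx E]]. exists x. split; auto. rewrite <- E. apply F0_in. exact Hx.
Qed.

Lemma Phi1_img_t1 t1 y : t1 <> t0 -> w t1 = 1 -> (Img S (Phi1 B t0 w) (y, t1) <-> S (y,t1)).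
Proof. intros N W. unfold Img, Phi1. simpl. destruct (Req_EM_T t1 t0) as [E|_]; [contradiction|].
  rewrite W, Rinv_1. split.
  - intros [x [Hx E]]. rewrite FK_1 in E. subst. auto. exact HBo1. exact HB21.
  - intros Hy. exists y. split; auto. apply FK_1. exact HBo1. exact HB21.
Qed.
End SB2.

Lemma model_level (T : R*R -> Prop) t0 (B : R -> Prop) J :
  openR B -> (forall z, 2 <= Rabs z -> ~ B z) ->
  (forall y, T (y,t0) <-> exists x, B x /\ sh B x = y) ->
  (exists I, (exists x, I x) /\ convex I /\ (forall x, I x -> T (x, t0)) /\
    (forall I', convex I' -> (forall x, I x -> I' x) -> (forall x, I' x -> T (x, t0)) -> forall x, I' x -> I x) /\
    (forall p, J p <-> (I (fst p) /\ snd p = t0))) ->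
  exists x0, B x0 /\ forall p, J p <-> (ea B x0 + (eb B x0 - ea B x0)/3 < fst p < eb B x0 - (eb B x0 - ea B x0)/3 /\ snd p = t0).
Proof. intros HBo HB2 HT [I [[y0 Hy0] [C [IT [M HJ]]]]].
  destruct (proj1 (HT y0) (IT y0 Hy0)) as [x0 [Bx0 Ex0]].
  exists x0. split; auto.
  set (a0 := ea B x0) in *. set (b0 := eb B x0) in *.
  pose proof (ea_lt B HBo HB2 x0 Bx0). pose proof (eb_gt B HBo HB2 x0 Bx0). fold a0 b0 in H, H0.
  set (Mi := fun y => a0 + (b0 - a0)/3 < y < b0 - (b0 - a0)/3).
  assert (HSH : forall y, T (y,t0) -> a0 < y < b0 -> Mi y).
  { intros y Hy Hyab. destruct (proj1 (HT y) Hy) as [x [Bx Ex]]. subst y.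
    pose proof (ea_lt B HBo HB2 x Bx). pose proof (eb_gt B HBo HB2 x Bx).
    destruct (Rtotal_order x x0) as [Lt|[Eq|Gt]].
    - destruct (diff_comp B HBo HB2 x x0 Bx Bx0 Lt) as [[E1 E2]|E].
      + unfold Mi, sh. fold a0 b0 in E1, E2. rewrite <- E1, <- E2. split; lra.
      + pose proof (sh_range B HBo HB2 x Bx). fold a0 in E. lra.
    - subst. apply (sh_range B HBo HB2 x0 Bx0).
    - destruct (diff_comp B HBo HB2 x0 x Bx0 Bx Gt) as [[E1 E2]|E].
      + unfold Mi, sh. fold a0 b0 in E1, E2. rewrite E1, E2. split; lra.
      + pose proof (sh_range B HBo HB2 x Bx). fold b0 in E. lra. }
  assert (HMT : forall y, Mi y -> T (y, t0)).
  { intros y Hy. apply HT. exists (3 * y - a0 - b0).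
    assert (Hc : a0 < 3 * y - a0 - b0 < b0) by (unfold Mi in Hy; lra).
    split. apply (comp_in B HB2 x0); auto.
    destruct (same_comp B HBo HB2 x0 _ Bx0 Hc) as [E1 E2]. unfold sh. rewrite E1, E2. fold a0 b0. field. }
  assert (Hy0M : Mi y0) by (rewrite <- Ex0; apply (sh_range B HBo HB2 x0 Bx0)).
  assert (IM : forall y, I y -> Mi y).
  { intros y Hy. unfold Mi. split.
    - destruct (Rle_dec y (a0 + (b0 - a0)/3)) as [Le|Le]; [|lra]. exfalso.
      assert (I (a0 + (b0 - a0)/3)) by (apply (C y _ y0); auto; unfold Mi in Hy0M; lra).
      specialize (HSH _ (IT _ H1) ltac:(lra)). unfold Mi in HSH. lra.
    - destruct (Rle_dec (b0 - (b0 - a0)/3) y) as [Le|Le]; [|lra]. exfalso.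
      assert (I (b0 - (b0 - a0)/3)) by (apply (C y0 _ y); auto; unfold Mi in Hy0M; lra).
      specialize (HSH _ (IT _ H1) ltac:(lra)). unfold Mi in HSH. lra. }
  assert (MI : forall y, Mi y -> I y).
  { intros y Hy. apply (M (fun z => I z \/ Mi z)); auto.
    - apply (convex_union I Mi y0); auto. intros p q r Hp Hr Hq. unfold Mi in *. lra.
    - intros z [Hz|Hz]; auto. }
  intros p. rewrite HJ. split; intros [G1 G2]; split; auto. apply (IM _ G1).
Qed.


Lemma closure_interval J lo hi t p : (forall p', J p' <-> (lo < fst p' < hi /\ snd p' = t)) ->
  closure2 J p -> lo <= fst p <= hi /\ snd p = t.
Proof. intros HJ Hc.
  assert (A : forall e, 0 < e -> lo - e < fst p < hi + e /\ Rabs (t - snd p) < e).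
  { intros e He. destruct (Hc e He) as [p' [Hp' [E1 E2]]]. apply HJ in Hp'. destruct Hp' as [H1 H2].
    rewrite H2 in E2. apply Rabs_def2 in E1. split; auto. lra. }
  split; [split|].
  - destruct (Rle_dec lo (fst p)); auto. exfalso. destruct (A ((lo - fst p)/2) ltac:(lra)). lra.
  - destruct (Rle_dec (fst p) hi); auto. exfalso. destruct (A ((fst p - hi)/2) ltac:(lra)). lra.
  - destruct (Req_dec (snd p) t); auto. exfalso.
    assert (0 < Rabs (t - snd p)) by (apply Rabs_pos_lt; lra).
    destruct (A (Rabs (t - snd p)) H0). lra.
Qed.

Lemma model_from_levels T u v : is_strip T u v ->
  (forall t0, t0 = u \/ t0 = v -> exists B, openR B /\ (forall z, 2 <= Rabs z -> ~ B z) /\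
     forall y, T (y,t0) <-> exists x, B x /\ sh B x = y) -> model_strip T u v.
Proof. intros Hs HL. split; auto. split.
  - intros J [t [I [Ht HI]]]. destruct (HL t Ht) as [B [HBo [HB2 HT]]].
    destruct (model_level T t B J HBo HB2 HT) as [x0 [Bx0 HJ]].
    { exists I. tauto. }
    exists 2. intros p Hp. apply HJ in Hp. pose proof (ea_bounds B HB2 x0 Bx0).
    pose proof (ea_lt B HBo HB2 x0 Bx0). pose proof (eb_gt B HBo HB2 x0 Bx0).
    apply Rabs_le. lra.
  - intros J1 J2 [t1 [I1 [Ht1 HI1]]] [t2 [I2 [Ht2 HI2]]] N p [C1 C2].
    destruct (HL t1 Ht1) as [B [HBo [HB2 HT]]].
    destruct (model_level T t1 B J1 HBo HB2 HT) as [x1 [Bx1 HJ1]]. { exists I1. tauto. }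
    destruct (closure_interval _ _ _ _ p HJ1 C1) as [P1 Q1].
    destruct (HL t2 Ht2) as [B' [HBo' [HB2' HT']]].
    destruct (model_level T t2 B' J2 HBo' HB2' HT') as [x2' [_ HJ2']]. { exists I2. tauto. }
    destruct (closure_interval _ _ _ _ p HJ2' C2) as [_ Q2]. rewrite Q1 in Q2. subst t2.
    destruct (model_level T t1 B J2 HBo HB2 HT) as [x2 [Bx2 HJ2]]. { exists I2. tauto. }
    destruct (closure_interval _ _ _ _ p HJ2 C2) as [P2 _].
    pose proof (ea_lt B HBo HB2 x1 Bx1). pose proof (eb_gt B HBo HB2 x1 Bx1).
    pose proof (ea_lt B HBo HB2 x2 Bx2). pose proof (eb_gt B HBo HB2 x2 Bx2).
    destruct (Rtotal_order x1 x2) as [Lt|[Eq|Gt]].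
    + destruct (diff_comp B HBo HB2 x1 x2 Bx1 Bx2 Lt) as [[E1 E2]|E].
      * apply N. intros q. rewrite HJ1, HJ2, E1, E2. tauto.
      * lra.
    + subst. apply N. intros q. rewrite HJ1, HJ2. tauto.
    + destruct (diff_comp B HBo HB2 x2 x1 Bx2 Bx1 Gt) as [[E1 E2]|E].
      * apply N. intros q. rewrite HJ1, HJ2, E1, E2. tauto.
      * lra.
Qed.

Definition PA (u v : R) (x t : R) : R := atan x + (t - u) * (v - t) * x.

Lemma atan_cont x e : 0 < e -> exists d, 0 < d /\ forall x', Rabs (x' - x) < d -> Rabs (atan x' - atan x) < e.
Proof. intros He. pose proof (derivable_continuous_pt atan x (derivable_pt_atan x)) as H.
  destruct (H e He) as [d [Hd Hd']]. exists d. split; auto. intros x' Hx'.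
  destruct (Req_dec x' x) as [->|N]. apply Rabs_self; auto.
  apply (Hd' x'). split. split; auto. exact I. auto. Qed.

Lemma atan_lt2 x : Rabs (atan x) < 2.
Proof. pose proof (atan_bound x). pose proof PI_4. apply Rabs_def1; lra. Qed.

Lemma PA_good S u v : is_strip S u v -> Good S u v (PA u v).
Proof. intros Hs. pose proof Hs as [Huv _]. split; [auto|split; [|split]].
  - intros x t Hx e He. pose proof (strip_bounds S u v x t Hs Hx) as Ht.
    set (W := v - u).
    destruct (atan_cont x (e/3) ltac:(lra)) as [d1 [Hd1 Hd1']].
    set (c1 := e / (3 * (W * W + 1))). set (c2 := e / (3 * (W * (Rabs x + 1) + 1))).
    assert (HW : 0 < W) by (unfold W; lra).
    pose proof (Rabs_pos x).
    assert (Hc1 : 0 < c1) by (unfold c1; apply Rdiv_lt_0_compat; nra).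
    assert (Hc2 : 0 < c2) by (unfold c2; apply Rdiv_lt_0_compat; nra).
    exists (Rmin d1 (Rmin c1 c2)). split. { repeat apply Rmin_pos; auto. }
    intros x' t' Hx' E1 E2. pose proof (strip_bounds S u v x' t' Hs Hx') as Ht'.
    pose proof (Rmin_l d1 (Rmin c1 c2)). pose proof (Rmin_r d1 (Rmin c1 c2)).
    pose proof (Rmin_l c1 c2). pose proof (Rmin_r c1 c2).
    specialize (Hd1' x' ltac:(lra)).
    unfold PA.
    replace (atan x' + (t' - u) * (v - t') * x' - (atan x + (t - u) * (v - t) * x)) with
      ((atan x' - atan x) + (t' - u) * (v - t') * (x' - x) + ((t' - t) * (u + v - t - t')) * x) by ring.
    assert (M1 : 0 <= (t' - u) * (v - t') <= W * W) by (unfold W; split; nra).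
    assert (M2 : Rabs (u + v - t - t') <= W) by (apply Rabs_le; unfold W; lra).
    assert (A2 : Rabs ((t' - u) * (v - t') * (x' - x)) <= W * W * Rabs (x' - x)).
    { rewrite Rabs_mult. rewrite (Rabs_right ((t' - u) * (v - t'))) by lra. apply Rmult_le_compat_r. apply Rabs_pos. lra. }
    assert (A3 : Rabs ((t' - t) * (u + v - t - t') * x) <= Rabs (t' - t) * (W * Rabs x)).
    { rewrite !Rabs_mult. rewrite Rmult_assoc. apply Rmult_le_compat_l. apply Rabs_pos.
      apply Rmult_le_compat_r; auto. }
    assert (B2 : W * W * Rabs (x' - x) <= W * W * c1).
    { apply Rmult_le_compat_l. nra. lra. }
    assert (B3 : Rabs (t' - t) * (W * Rabs x) <= c2 * (W * Rabs x)).
    { apply Rmult_le_compat_r. nra. lra. }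
    assert (C1 : W * W * c1 < e / 3).
    { unfold c1. apply (Rmult_lt_reg_r (3 * (W * W + 1))). nra.
      replace (W * W * (e / (3 * (W * W + 1))) * (3 * (W * W + 1))) with (W * W * e) by (field; nra).
      replace (e / 3 * (3 * (W * W + 1))) with (W * W * e + e) by field. lra. }
    assert (C2 : c2 * (W * Rabs x) < e / 3).
    { unfold c2. apply (Rmult_lt_reg_r (3 * (W * (Rabs x + 1) + 1))). nra.
      replace (e / (3 * (W * (Rabs x + 1) + 1)) * (W * Rabs x) * (3 * (W * (Rabs x + 1) + 1))) with (W * Rabs x * e) by (field; nra).
      replace (e / 3 * (3 * (W * (Rabs x + 1) + 1))) with (W * Rabs x * e + W * e + e) by field. nra. }
    eapply Rle_lt_trans. apply Rabs_triang. eapply Rle_lt_trans. apply Rplus_le_compat_r. apply Rabs_triang.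
    lra.
  - intros x y t Hx Hy Hxy. pose proof (strip_bounds S u v x t Hs Hx). unfold PA.
    pose proof (atan_increasing x y Hxy). assert (0 <= (t - u) * (v - t)) by nra. nra.
  - intros t Ht y. set (m := (t - u) * (v - t)).
    assert (Hm : 0 < m) by (unfold m; nra).
    set (hi := (Rabs y + 2) / m).
    assert (Hhi : m * hi = Rabs y + 2) by (unfold hi; field; lra).
    assert (0 < hi) by (unfold hi; apply Rdiv_lt_0_compat; pose proof (Rabs_pos y); lra).
    pose proof (atan_lt2 hi). pose proof (atan_lt2 (- hi)). apply Rabs_def2 in H0. apply Rabs_def2 in H1.
    assert (- Rabs y <= y <= Rabs y) by (unfold Rabs; destruct Rcase_abs; lra).
    destruct (myIVT (fun x => PA u v x t) (- hi) hi y) as [z [_ Ez]].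
    + lra.
    + intros x _ e He. destruct (atan_cont x (e/2) ltac:(lra)) as [d [Hd Hd']].
      exists (Rmin d (e / (2 * (m + 1)))). split. { apply Rmin_pos; auto. apply Rdiv_lt_0_compat; lra. }
      intros x' _ Hx'. pose proof (Rmin_l d (e / (2 * (m + 1)))). pose proof (Rmin_r d (e / (2 * (m + 1)))).
      specialize (Hd' x' ltac:(lra)). unfold PA. fold m.
      replace (atan x' + m * x' - (atan x + m * x)) with ((atan x' - atan x) + m * (x' - x)) by ring.
      eapply Rle_lt_trans. apply Rabs_triang. rewrite Rabs_mult. rewrite (Rabs_right m) by lra.
      assert (m * Rabs (x' - x) <= m * (e / (2 * (m + 1)))) by (apply Rmult_le_compat_l; lra).
      assert (m * (e / (2 * (m + 1))) < e / 2).
      { apply (Rmult_lt_reg_r (2 * (m + 1))). lra.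
        replace (m * (e / (2 * (m + 1))) * (2 * (m + 1))) with (m * e) by (field; lra). nra. }
      lra.
    + unfold PA. fold m. replace (m * - hi) with (- (Rabs y + 2)) by lra. split; lra.
    + exists z. exact Ez.
Qed.

Lemma PA_level S u v y t : is_strip S u v -> (t = u \/ t = v) -> Img S (PA u v) (y, t) -> Rabs y < 2.
Proof. intros Hs Ht [x [Hx E]]. simpl in *. unfold PA in E.
  replace ((t - u) * (v - t) * x) with 0 in E by (destruct Ht; subst; ring). rewrite Rplus_0_r in E.
  subst. apply atan_lt2. Qed.

Lemma lam_cont u v : u < v -> forall t e, 0 < e -> exists d, 0 < d /\
  forall t', u <= t' <= v -> Rabs (t' - t) < d -> Rabs (lam u v t' - lam u v t) < e.
Proof. intros Huv t e He. exists (e * (v - u)). split. nra. intros t' _ H.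
  rewrite lam_diff by auto. apply (Rmult_lt_reg_r (v - u)). lra. unfold Rdiv. rewrite Rmult_assoc, Rinv_l by lra. lra. Qed.

Lemma lam1_cont u v : u < v -> forall t e, 0 < e -> exists d, 0 < d /\
  forall t', u <= t' <= v -> Rabs (t' - t) < d -> Rabs ((1 - lam u v t') - (1 - lam u v t)) < e.
Proof. intros Huv t e He. destruct (lam_cont u v Huv t e He) as [d [Hd H]]. exists d. split; auto.
  intros t' Ht' Htt. replace (1 - lam u v t' - (1 - lam u v t)) with (- (lam u v t' - lam u v t)) by ring.
  rewrite Rabs_Ropp. auto. Qed.

Lemma lam_pos u v t : u < v -> u <= t <= v -> t <> u -> 0 < lam u v t <= 1.
Proof. intros H1 H2 H3. pose proof (lam_range u v t H1 H2). split; [|lra].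
  unfold lam. apply Rdiv_lt_0_compat; lra. Qed.
Lemma lam1_pos u v t : u < v -> u <= t <= v -> t <> v -> 0 < 1 - lam u v t <= 1.
Proof. intros H1 H2 H3. pose proof (lam_range u v t H1 H2). split; [|lra].
  assert (lam u v t < 1). { unfold lam. apply (Rmult_lt_reg_r (v - u)). lra. unfold Rdiv. rewrite Rmult_assoc, Rinv_l by lra. lra. }
  lra. Qed.

Lemma compress S u v : is_strip S u v -> exists Phi, Good S u v Phi /\ model_strip (Img S Phi) u v.
Proof. intros Hs. pose proof Hs as [Huv _].
  pose proof (PA_good S u v Hs) as GA. set (SA := Img S (PA u v)).
  assert (HsA : is_strip SA u v) by (apply Img_strip; auto).
  set (Bu := fun x => SA (x,u)).
  assert (G1 : Good SA u v (Phi1 Bu u (lam u v))).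
  { apply Phi1_good; auto.
    - intros x Hx. apply (PA_level S u v x u Hs); auto.
    - intros t Ht N. apply lam_pos; auto.
    - intros t _ e He. apply lam_cont; auto.
    - apply lam_u; auto. }
  set (S1 := Img SA (Phi1 Bu u (lam u v))).
  assert (Hs1 : is_strip S1 u v) by (apply Img_strip; auto).
  assert (E1v : forall y, S1 (y,v) <-> SA (y,v)).
  { intros y. apply (Phi1_img_t1 SA u v u (lam u v) HsA).
    intros x Hx. apply (PA_level S u v x u Hs); auto. lra.
    apply lam_v; auto. }
  assert (E1u : forall y, S1 (y,u) <-> exists x, Bu x /\ sh Bu x = y).
  { intros y. apply (Phi1_img_t0 SA u (lam u v)). }
  set (Bv := fun x => S1 (x,v)).
  assert (G2 : Good S1 u v (Phi1 Bv v (fun t => 1 - lam u v t))).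
  { apply Phi1_good; auto.
    - intros x Hx. apply E1v in Hx. apply (PA_level S u v x v Hs); auto.
    - intros t Ht N. apply lam1_pos; auto.
    - intros t _ e He. apply lam1_cont; auto.
    - rewrite lam_v; auto; ring. }
  set (S2 := Img S1 (Phi1 Bv v (fun t => 1 - lam u v t))).
  exists (compF (compF (PA u v) (Phi1 Bu u (lam u v))) (Phi1 Bv v (fun t => 1 - lam u v t))).
  split.
  - apply comp_good. apply comp_good; auto. rewrite comp_img. auto.
  - rewrite comp_img. rewrite comp_img. fold SA S1 S2.
    apply model_from_levels. apply Img_strip; auto.
    intros t0 [-> | ->].
    + exists Bu. split; [apply (level_openR SA u v u HsA)|]. split.
      { intros z Hz Bz. pose proof (PA_level S u v z u Hs (or_introl eq_refl) Bz). lra. }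
      intros y. unfold S2. transitivity (S1 (y,u)); [|apply E1u].
      apply (Phi1_img_t1 S1 u v v (fun t => 1 - lam u v t) Hs1).
      * intros x Hx. apply E1v in Hx. apply (PA_level S u v x v Hs); auto.
      * lra.
      * rewrite lam_u; auto; ring.
    + exists Bv. split; [apply (level_openR S1 u v v Hs1)|]. split.
      { intros z Hz Bz. apply E1v in Bz. pose proof (PA_level S u v z v Hs (or_intror eq_refl) Bz). lra. }
      intros y. unfold S2. apply (Phi1_img_t0 S1 v (fun t => 1 - lam u v t)).
Qed.

Lemma S'_Inv_eq {L : Type} (S : L -> R*R -> Prop) u v Phi : (forall l, Good (S l) (u l) (v l) (Phi l)) ->
  S' (S' S Phi) (fun l => Inv (S l) (Phi l)) = S.
Proof. intros HG. apply functional_extensionality. intro l. unfold S'. apply (Img_Inv_eq (S l) (u l) (v l)). auto. Qed.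

Lemma leaf_sub {L : Type} (S : L -> R*R -> Prop) u v Lf x : (forall l, is_strip (S l) (u l) (v l)) ->
  S0_leaf S u v Lf -> Lf x -> S0 S x.
Proof. intros Hs [l [L0 [HL HLf]]] Hx. apply HLf in Hx. destruct Hx as [E Hx]. unfold S0. rewrite E.
  destruct HL as [[t [Ht HL0]]|Hb].
  - destruct (snd x) as [y s] eqn:Es. apply HL0 in Hx. simpl in Hx. subst s. apply (Hs l). auto.
  - eapply bi_sub'; eauto.
Qed.

Lemma id_homeo {Z : Type} (opnZ : (Z -> Prop) -> Prop) : homeo_on opnZ (fun _ => True) opnZ (fun _ => True) (fun z => z).
Proof. exists (fun z => z). split; [|split; [|split]].
  - split; auto. intros V HV. exists V. split; auto. tauto.
  - split; auto. intros V HV. exists V. split; auto. tauto.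
  - auto.
  - auto.
Qed.

Theorem mainTheorem6 :
  forall (L Z : Type) (opnZ : (Z -> Prop) -> Prop) (S : L -> R * R -> Prop)
         (u v : L -> R) (q : L * (R * R) -> Z),
    is_topology opnZ -> surface2 opnZ -> striped_atlas opnZ S u v q ->
    (exists (L' Z' : Type) (opnZ' : (Z' -> Prop) -> Prop) (S' : L' -> R * R -> Prop)
            (u' v' : L' -> R) (q' : L' * (R * R) -> Z'),
        is_topology opnZ' /\ surface2 opnZ' /\ affine_atlas opnZ' S' u' v' q' /\
        atlas_equiv opnZ S u v q opnZ' S' u' v' q') /\
    ((forall l, model_strip (S l) (u l) (v l)) ->
     exists h : L * (R * R) -> L * (R * R),
       homeo_on opnP (S0 S) opnP (S0 S) h /\
       maps_leaves (S0_leaf S u v) (S0_leaf S u v) h /\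
       affine_atlas opnZ S u v (fun x => q (h x))).
Proof.
  intros L Z opnZ S u v q Htop Hsurf [G [X [Y Hfam]]].
  assert (Hstr : forall l, is_strip (S l) (u l) (v l)) by apply Hfam.
  split.
  -
    set (P1 := fun l (F : R -> R -> R) => Good (S l) (u l) (v l) F /\ model_strip (Img (S l) F) (u l) (v l)).
    set (Phi1 := fun l => epsilon (inhabits (fun _ _ => 0)) (P1 l)).
    assert (HP1 : forall l, P1 l (Phi1 l)).
    { intros l. unfold Phi1. apply epsilon_spec. apply compress. auto. }
    assert (G1 : forall l, Good (S l) (u l) (v l) (Phi1 l)) by (intros l; apply HP1).
    set (S1 := S' S Phi1).
    set (q1 := fun y => q (gP S Phi1 y)).
    pose proof (transport S u v Phi1 G1 opnZ G q X Y Hfam) as Hfam1. fold S1 in Hfam1. fold q1 in Hfam1.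
    assert (Hmod1 : forall l, model_strip (S1 l) (u l) (v l)) by (intros l; apply HP1).
    destruct (part2_core opnZ S1 u v q1 _ _ Hfam1 Hmod1) as [G2 [I2 Aff]].
    set (Phi2 := PhiG u v q1 (fun g => imgB Phi1 (X g)) (fun g => imgB Phi1 (Y g))) in *.
    set (Phic := fun l => compF (Phi1 l) (Phi2 l)).
    assert (Gc : forall l, Good (S l) (u l) (v l) (Phic l)).
    { intros l. apply (comp_good (S l) (u l) (v l)); auto. apply G2. }
    assert (Ec : S' S Phic = S1).
    { apply functional_extensionality. intro l. unfold S', Phic. rewrite comp_img. apply I2. }
    assert (Hq : forall x, S0 S x -> q1 (gP S1 Phi2 (hP Phic x)) = q x).
    { intros x Hx. unfold q1.
      change (hP Phic x) with (hP Phi2 (hP Phi1 x)).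
      rewrite (gh S1 u v Phi2 G2). rewrite (gh S u v Phi1 G1); auto.
      apply (hS S u v Phi1 G1); auto. }
    exists L, Z, opnZ, S1, u, v, (fun x => q1 (gP S1 Phi2 x)).
    split; auto. split; auto. split; auto.
    exists (hP Phic), (fun z => z). split; [|split; [|split; [|split]]].
    + rewrite <- Ec. apply (homeo_h S u v Phic Gc).
    + rewrite <- Ec. apply (leaves_h S u v Phic Gc).
    + apply id_homeo.
    + intros K [Lf [HLf HK]]. exists (image (hP Phic) Lf). split.
      * rewrite <- Ec. apply (leaves_h S u v Phic Gc Lf HLf).
      * intros z. split.
        -- intros [z' [Hz' <-]]. apply HK in Hz'. destruct Hz' as [x [Hx <-]].
           exists (hP Phic x). split. exists x; auto. apply Hq. eapply leaf_sub; eauto.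
        -- intros [y [[x [Hx <-]] <-]]. exists (q x). split. apply HK. exists x; auto.
           symmetry. apply Hq. eapply leaf_sub; eauto.
    + intros x Hx. apply Hq. auto.
  -
    intros Hmod.
    destruct (part2_core opnZ S u v q X Y Hfam Hmod) as [G2 [I2 Aff]].
    set (Phi := PhiG u v q X Y) in *.
    assert (E1 : S' S Phi = S).
    { apply functional_extensionality. intro l. apply I2. }
    set (Psi := fun l => Inv (S l) (Phi l)).
    assert (GPsi : forall l, Good (S' S Phi l) (u l) (v l) (Psi l)).
    { intros l. apply Inv_good. auto. }
    assert (E2 : S' (S' S Phi) Psi = S) by (apply (S'_Inv_eq S u v Phi); auto).
    exists (gP S Phi). split; [|split].
    + pose proof (homeo_h (S' S Phi) u v Psi GPsi) as H. rewrite E2 in H. rewrite E1 in H. exact H.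
    + pose proof (leaves_h (S' S Phi) u v Psi GPsi) as H. rewrite E2 in H. rewrite E1 in H. exact H.
    + exact Aff.
Qed.
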